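(* Let \[ r_2 = \frac{1}{4} \left(1 + \sqrt{33} - \sqrt{2 \left(9 + \sqrt{33} \right)} \right). \] Then \[ \operatorname{Li}_{2}(r_2^6) - 3 \operatorname{Li}_{2}(r_2^4) - 8 \operatorname{Li}_{2}(r_2^3) + 21 \operatorname{Li}_{2}(r_2^2) + 24 \operatorname{Li}_{2}(r_2) - 11 \zeta(2) = -6 \log^{2}(r_2). \]
   Context: $\operatorname{Li}_2(x)=\sum_{n\ge1}x^n/n^2$ is the dilogarithm and $\zeta(2)=\pi^2/6$. *)

(* Defs.v *)
From Stdlib Require Import Reals.
From Coquelicot Require Import Coquelicot.
Open Scope R_scope.

(* Dilogarithm Li_2(x) = sum_{n>=1} x^n / n^2 (Coquelicot's total Series;
   reindexed from n = 0 as x^(n+1)/(n+1)^2). Used only for |x| <= 1. *)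
Definition Li2 (x : R) : R :=
  Series (fun n : nat => x ^ (S n) / (INR (S n)) ^ 2).

Definition zeta2 : R := PI ^ 2 / 6.

Definition r2 : R :=
  / 4 * (1 + sqrt 33 - sqrt (2 * (9 + sqrt 33))).

(* Main.v *)
Require Import Defs.
From Stdlib Require Import Reals Lra Lia.
From Coquelicot Require Import Coquelicot.
Open Scope R_scope.

Definition a2 (n : nat) : R := / INR (S n) ^ 2.
Definition c2 : nat -> R := PS_incr_1 a2.
Definition g1 (n : nat) : R := / INR (S n).
Definition lg : nat -> R := PS_incr_1 g1.

Lemma INRS_pos n : 0 < INR (S n).
Proof. apply lt_0_INR; lia. Qed.

Lemma Li2_PS x : Li2 x = PSeries c2 x.
Proof.
  unfold c2. rewrite PSeries_incr_1. unfold Li2, PSeries.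
  rewrite <- Series_scal_l. apply Series_ext. intro n. unfold a2.
  change (x ^ S n) with (x * x ^ n).
  pose proof (INRS_pos n). field. lra.
Qed.

Lemma CV_ge1 (a : nat -> R) : (forall n, Rabs (a n) <= 1) ->
  forall x, Rabs x < 1 -> Rbar_lt (Rabs x) (CV_radius a).
Proof.
  intros Ha x Hx.
  destruct (CV_radius_bounded a) as [Hub _].
  assert (H1 : Rbar_le 1 (CV_radius a)).
  { apply Hub. exists 1. intro n. rewrite pow1, Rmult_1_r. apply Ha. }
  destruct (CV_radius a) as [c| |]; simpl in *; lra.
Qed.

Lemma a2_le n : Rabs (a2 n) <= 1.
Proof.
  unfold a2. pose proof (INRS_pos n) as H.
  assert (1 <= INR (S n)) by (apply (le_INR 1); lia).
  rewrite Rabs_pos_eq.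
  - rewrite <- Rinv_1. apply Rinv_le_contravar; [lra|]. nra.
  - apply Rlt_le, Rinv_0_lt_compat. nra.
Qed.

Lemma g1_le n : Rabs (g1 n) <= 1.
Proof.
  unfold g1. pose proof (INRS_pos n) as H.
  assert (1 <= INR (S n)) by (apply (le_INR 1); lia).
  rewrite Rabs_pos_eq.
  - rewrite <- Rinv_1. apply Rinv_le_contravar; lra.
  - apply Rlt_le, Rinv_0_lt_compat. lra.
Qed.

Lemma CV_c2 x : Rabs x < 1 -> Rbar_lt (Rabs x) (CV_radius c2).
Proof. intro. unfold c2. rewrite CV_radius_incr_1. apply CV_ge1; auto using a2_le. Qed.
Lemma CV_lg x : Rabs x < 1 -> Rbar_lt (Rabs x) (CV_radius lg).
Proof. intro. unfold lg. rewrite CV_radius_incr_1. apply CV_ge1; auto using g1_le. Qed.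

Lemma PSd_c2 n : PS_derive c2 n = g1 n.
Proof.
  unfold PS_derive, c2, PS_incr_1, a2, g1. pose proof (INRS_pos n). field. lra.
Qed.
Lemma PSd_lg n : PS_derive lg n = 1.
Proof.
  unfold PS_derive, lg, PS_incr_1, g1. pose proof (INRS_pos n). field. lra.
Qed.

Lemma zero_deriv_const (f : R -> R) (a b : R) :
  (forall t, a < t < b -> is_derive f t 0) -> forall x y, a < x < b -> a < y < b -> f x = f y.
Proof.
  intros Hd x y Hx Hy.
  destruct (MVT_gen f x y (fun _ => 0)) as [c [_ Hc]].
  - intros t Ht. apply Hd. unfold Rmin, Rmax in Ht. destruct (Rle_dec x y); lra.
  - intros t Ht. apply continuity_pt_filterlim.
    assert (Hdt : ex_derive f t).
    { exists 0. apply Hd. unfold Rmin, Rmax in Ht. destruct (Rle_dec x y); lra. }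
    exact (ex_derive_continuous f t Hdt).
  - lra.
Qed.

Lemma lg_ln x : Rabs x < 1 -> PSeries lg x = - ln (1 - x).
Proof.
  intro Hx.
  assert (H : forall t, -1 < t < 1 -> is_derive (fun t => PSeries lg t + ln (1 - t)) t 0).
  { intros t Ht.
    assert (Ht' : Rabs t < 1) by (apply Rabs_def1; lra).
    replace 0 with (PSeries (PS_derive lg) t + (- / (1 - t))).
    - apply (is_derive_plus (fun t => PSeries lg t) (fun t => ln (1 - t))).
      + apply is_derive_PSeries. now apply CV_lg.
      + auto_derive. lra. field. lra.
    - rewrite (PSeries_ext _ (fun _ => 1)) by apply PSd_lg.
      unfold PSeries. rewrite (Series_ext _ (fun n => t ^ n)) by (intro; ring).
      rewrite (is_series_unique _ _ (is_series_geom t Ht')). field. lra. }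
  assert (Hx' : -1 < x < 1) by (apply Rabs_def2 in Hx; lra).
  pose proof (zero_deriv_const _ (-1) 1 H x 0 Hx' ltac:(lra)).
  assert (H0' : PSeries lg 0 = 0) by (unfold lg; rewrite PSeries_incr_1; ring).
  cbv beta in H0. rewrite H0' in H0. replace (1 - 0) with 1 in H0 by ring. rewrite ln_1 in H0. lra.
Qed.

Lemma Li2_deriv x : Rabs x < 1 -> is_derive Li2 x (PSeries g1 x).
Proof.
  intro Hx. apply (is_derive_ext (PSeries c2)). { intro; now rewrite Li2_PS. }
  rewrite <- (PSeries_ext _ _ _ PSd_c2). apply is_derive_PSeries. now apply CV_c2.
Qed.

Lemma g1_ln x : Rabs x < 1 -> x * PSeries g1 x = - ln (1 - x).
Proof. intro. rewrite <- lg_ln by auto. unfold lg. now rewrite PSeries_incr_1. Qed.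

Lemma ln_le_xm1 x : 0 < x -> ln x <= x - 1.
Proof. intro H. pose proof (exp_ineq1_le (ln x)). rewrite exp_ln in H0 by auto. lra. Qed.

Lemma ln_neg x : 0 < x < 1 -> ln x < 0.
Proof. intro H. rewrite <- ln_1. apply ln_increasing; lra. Qed.

Lemma ln_1m_bound t : 0 <= t < 1 -> 0 <= - ln (1 - t) <= t / (1 - t).
Proof.
  intro H. split.
  - destruct (Req_dec t 0) as [->|Ht].
    + replace (1-0) with 1 by ring. rewrite ln_1. lra.
    + pose proof (ln_neg (1 - t)). lra.
  - pose proof (ln_le_xm1 (/ (1 - t))) as H1.
    rewrite ln_Rinv in H1 by lra.
    replace (t / (1 - t)) with (/ (1 - t) - 1) by (field; lra).
    apply H1. apply Rinv_0_lt_compat. lra.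
Qed.

Lemma ln_small t : 0 < t <= 1 -> 0 <= - ln t <= 2 / sqrt t.
Proof.
  intro H. pose proof (sqrt_lt_R0 t ltac:(lra)) as Hs.
  pose proof (sqrt_sqrt t ltac:(lra)) as Hss.
  split.
  - destruct (Req_dec t 1) as [->|Ht]. rewrite ln_1; lra.
    pose proof (ln_neg t). lra.
  - assert (E : ln t = 2 * ln (sqrt t)).
    { rewrite <- Hss at 1. rewrite ln_mult by lra. ring. }
    pose proof (ln_le_xm1 (/ sqrt t)) as H1.
    rewrite ln_Rinv in H1 by lra.
    assert (0 < / sqrt t) by (apply Rinv_0_lt_compat; lra).
    specialize (H1 H0). rewrite E. unfold Rdiv. lra.
Qed.

Lemma Li2_bound t : 0 <= t < 1 -> 0 <= Li2 t <= t / (1 - t).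
Proof.
  intro H.
  assert (Ht : Rabs t < 1) by (rewrite Rabs_pos_eq; lra).
  assert (Hle : forall n, 0 <= t ^ S n / INR (S n) ^ 2 <= t * t ^ n).
  { intro n. pose proof (INRS_pos n).
    assert (1 <= INR (S n)) by (apply (le_INR 1); lia).
    assert (0 <= t ^ n) by (apply pow_le; lra).
    change (t ^ S n) with (t * t ^ n). split.
    - apply Rmult_le_pos. apply Rmult_le_pos; lra. apply Rlt_le, Rinv_0_lt_compat. nra.
    - unfold Rdiv. rewrite <- (Rmult_1_r (t * t ^ n)) at 2. apply Rmult_le_compat_l.
      apply Rmult_le_pos; lra. rewrite <- Rinv_1. apply Rinv_le_contravar; [lra|]. nra. }
  assert (Hex : ex_series (fun n => t * t ^ n)).
  { apply (ex_series_scal_l t (fun n => t ^ n)). now apply ex_series_geom. }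
  split.
  - assert (S0 : Series (fun _ : nat => 0) = 0).
    { rewrite (Series_ext _ (fun n : nat => 0 * 0)) by (intro; ring).
      rewrite Series_scal_l. ring. }
    unfold Li2. rewrite <- S0. apply Series_le.
    + intro n. specialize (Hle n). lra.
    + refine (@ex_series_le R_AbsRing R_CompleteNormedModule _ (fun n => t * t ^ n) _ Hex).
      intro n. specialize (Hle n). change norm with Rabs. rewrite Rabs_pos_eq; lra.
  - unfold Li2. eapply Rle_trans. apply Series_le. exact Hle. exact Hex.
    rewrite (Series_scal_l t (fun n => t ^ n)). rewrite (is_series_unique _ _ (is_series_geom t Ht)).
    unfold Rdiv. lra.
Qed.

Definition Lr x := Li2 x + / 2 * ln x * ln (1 - x).
Definition dLr x := - / 2 * (ln (1 - x) / x + ln x / (1 - x)).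

Lemma Lr_deriv x : 0 < x < 1 -> is_derive Lr x (dLr x).
Proof.
  intro H. assert (Hx : Rabs x < 1) by (rewrite Rabs_pos_eq; lra).
  unfold Lr, dLr.
  replace (- / 2 * (ln (1 - x) / x + ln x / (1 - x))) with
    (PSeries g1 x + (/ 2 * (/ x * ln (1 - x) + ln x * (- / (1 - x))))).
  - apply (is_derive_plus Li2 (fun x => / 2 * ln x * ln (1 - x))).
    + now apply Li2_deriv.
    + auto_derive. lra. replace (1 + - x) with (1 - x) by ring. field. lra.
  - pose proof (g1_ln x Hx) as G.
    replace (PSeries g1 x) with (- ln (1 - x) / x) by (field_simplify; [rewrite <- G; field|]; lra).
    field. lra.
Qed.

Lemma Lr_small t : 0 < t <= 1/2 -> Rabs (Lr t) <= 4 * sqrt t.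
Proof.
  intro H. pose proof (Li2_bound t ltac:(lra)) as H1.
  pose proof (ln_1m_bound t ltac:(lra)) as H2.
  pose proof (ln_small t ltac:(lra)) as H3.
  pose proof (sqrt_lt_R0 t ltac:(lra)) as Hs.
  pose proof (sqrt_sqrt t ltac:(lra)) as Hss.
  assert (Hst : t <= sqrt t).
  { assert (sqrt t <= 1). { rewrite <- sqrt_1. apply sqrt_le_1_alt. lra. } nra. }
  assert (E1 : t / (1 - t) <= 2 * t).
  { apply (Rmult_le_reg_r (1 - t)). lra. unfold Rdiv. rewrite Rmult_assoc, Rinv_l by lra. nra. }
  set (a := - ln t) in *. set (b := - ln (1 - t)) in *.
  assert (Hab : a * b <= 2 / sqrt t * (2 * t)).
  { apply Rmult_le_compat; lra. }
  assert (E2 : 2 / sqrt t * (2 * t) = 4 * sqrt t).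
  { rewrite <- Hss at 2. field. lra. }
  unfold Lr. replace (/ 2 * ln t * ln (1 - t)) with (/ 2 * (a * b)) by (unfold a, b; ring).
  assert (0 <= a * b) by (apply Rmult_le_pos; lra).
  rewrite Rabs_pos_eq by lra. lra.
Qed.

Lemma comp_Lr g x dg : is_derive g x dg -> 0 < g x < 1 ->
  is_derive (fun t => Lr (g t)) x (dg * dLr (g x)).
Proof. intros Hg H. exact (is_derive_comp Lr g x (dLr (g x)) dg (Lr_deriv _ H) Hg). Qed.

Lemma d5 (f1 f2 f3 f4 f5 : R -> R) x d1 d2 d3 d4 d5 :
  is_derive f1 x d1 -> is_derive f2 x d2 -> is_derive f3 x d3 -> is_derive f4 x d4 ->
  is_derive f5 x d5 ->
  is_derive (fun t => f1 t + f2 t - f3 t - f4 t - f5 t) x (d1 + d2 - d3 - d4 - d5).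
Proof.
  intros H1 H2 H3 H4 H5.
  apply (is_derive_minus (fun t => f1 t + f2 t - f3 t - f4 t) f5); auto.
  apply (is_derive_minus (fun t => f1 t + f2 t - f3 t) f4); auto.
  apply (is_derive_minus (fun t => f1 t + f2 t) f3); auto.
  apply (is_derive_plus f1 f2); auto.
Qed.

Lemma is_derive_val (f : R -> R) x l l' : l = l' -> is_derive f x l -> is_derive f x l'.
Proof. intros ->; auto. Qed.

Lemma ln_div' a b : 0 < a -> 0 < b -> ln (a / b) = ln a - ln b.
Proof. intros. unfold Rdiv. rewrite ln_mult, ln_Rinv; try lra. apply Rinv_0_lt_compat; lra. Qed.

Definition F5 y x := Lr x + Lr y - Lr (x * y) - Lr (x * (1 - y) / (1 - x * y))
  - Lr (y * (1 - x) / (1 - x * y)).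

Lemma F5_deriv y x : 0 < y < 1 -> 0 < x < 1 -> is_derive (F5 y) x 0.
Proof.
  intros Hy Hx.
  assert (Hxy : 0 < x * y < 1) by nra.
  assert (Hu : 0 < x * (1 - y) / (1 - x * y) < 1).
  { split. apply Rdiv_lt_0_compat; nra. apply Rmult_lt_reg_r with (1 - x*y). lra.
    unfold Rdiv. rewrite Rmult_assoc, Rinv_l by lra. nra. }
  assert (Hv : 0 < y * (1 - x) / (1 - x * y) < 1).
  { split. apply Rdiv_lt_0_compat; nra. apply Rmult_lt_reg_r with (1 - x*y). lra.
    unfold Rdiv. rewrite Rmult_assoc, Rinv_l by lra. nra. }
  assert (D1 : is_derive (fun t => t * y) x y) by (auto_derive; [auto|ring]).
  assert (D2 : is_derive (fun t => t * (1 - y) / (1 - t * y)) x ((1 - y) / (1 - x * y) ^ 2))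
    by (auto_derive; [nra|field; nra]).
  assert (D3 : is_derive (fun t => y * (1 - t) / (1 - t * y)) x (- y * (1 - y) / (1 - x * y) ^ 2))
    by (auto_derive; [nra|field; nra]).
  pose proof (d5 Lr (fun _ => Lr y) (fun t => Lr (t * y)) (fun t => Lr (t * (1 - y) / (1 - t * y)))
    (fun t => Lr (y * (1 - t) / (1 - t * y))) x _ _ _ _ _
    (Lr_deriv x Hx) (is_derive_const (Lr y) x) (comp_Lr _ x _ D1 Hxy)
    (comp_Lr _ x _ D2 Hu) (comp_Lr _ x _ D3 Hv)) as D.
  match type of D with is_derive _ _ ?v => assert (V : v = 0) end.
  2:{ exact (is_derive_val _ _ _ _ V D). }
  cbv beta. unfold dLr, zero; simpl.
  assert (E1 : ln (x * (1 - y) / (1 - x * y)) = ln x + ln (1 - y) - ln (1 - x * y)).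
  { rewrite ln_div', ln_mult; try nra; lra. }
  assert (E2 : ln (1 - x * (1 - y) / (1 - x * y)) = ln (1 - x) - ln (1 - x * y)).
  { replace (1 - x * (1 - y) / (1 - x * y)) with ((1 - x) / (1 - x * y)) by (field; nra).
    rewrite ln_div'; nra. }
  assert (E3 : ln (y * (1 - x) / (1 - x * y)) = ln y + ln (1 - x) - ln (1 - x * y)).
  { rewrite ln_div', ln_mult; try nra; lra. }
  assert (E4 : ln (1 - y * (1 - x) / (1 - x * y)) = ln (1 - y) - ln (1 - x * y)).
  { replace (1 - y * (1 - x) / (1 - x * y)) with ((1 - y) / (1 - x * y)) by (field; nra).
    rewrite ln_div'; nra. }
  assert (E5 : ln (x * y) = ln x + ln y) by (rewrite ln_mult; lra).
  rewrite E1, E2, E3, E4, E5.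
  field. nra.
Qed.

Lemma sqrt_mono a b : 0 <= a <= b -> sqrt a <= sqrt b.
Proof. intros. apply sqrt_le_1_alt. lra. Qed.

Lemma F5_zero y x : 0 < y < 1 -> 0 < x < 1 -> F5 y x = 0.
Proof.
  intros Hy Hx.
  set (C := F5 y x).
  assert (Hc : forall z, 0 < z < 1 -> F5 y z = C).
  { intros z Hz. apply (zero_deriv_const (F5 y) 0 1); auto.
    intros t Ht. apply F5_deriv; auto. }
  set (h := fun t => Lr (y * (1 - t) / (1 - t * y))).
  assert (Hh : continuity_pt h 0).
  { apply continuity_pt_filterlim.
    assert (D3 : is_derive (fun t => y * (1 - t) / (1 - t * y)) 0 (- y * (1 - y) / (1 - 0 * y) ^ 2))
      by (auto_derive; [nra|field; nra]).
    assert (Hd : ex_derive h 0).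
    { eexists. apply (comp_Lr _ 0 _ D3). replace (y * (1 - 0) / (1 - 0 * y)) with y by (field; lra). lra. }
    exact (ex_derive_continuous h 0 Hd). }
  assert (h0 : h 0 = Lr y) by (unfold h; f_equal; field; lra).
  destruct (Req_dec C 0) as [|HC]; auto. exfalso.
  assert (Hpos : 0 < Rabs C) by (apply Rabs_pos_lt; auto).
  destruct (Hh (Rabs C / 2)) as [alp [Halp Hal]]. lra.
  set (z := Rmin (1/2) (Rmin (alp/2) ((Rabs C / 48)^2))).
  assert (Hz1 : 0 < z).
  { unfold z. apply Rmin_pos. lra. apply Rmin_pos. lra. apply pow_lt. lra. }
  assert (Hz2 : z <= 1/2) by apply Rmin_l.
  assert (Hz3 : z <= alp / 2) by (eapply Rle_trans; [apply Rmin_r|apply Rmin_l]).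
  assert (Hz4 : z <= (Rabs C / 48)^2) by (eapply Rle_trans; [apply Rmin_r|apply Rmin_r]).
  assert (Hsz : sqrt z <= Rabs C / 48).
  { rewrite <- (sqrt_pow2 (Rabs C / 48)) by lra. apply sqrt_mono. lra. }

  assert (Hzd : R_dist z 0 < alp) by (unfold R_dist; replace (z - 0) with z by ring; rewrite Rabs_pos_eq; lra).
  assert (Hdx : D_x no_cond 0 z) by (split; [exact I|lra]).
  specialize (Hal z (conj Hdx Hzd)).
  unfold R_dist in Hal. rewrite h0 in Hal.
  pose proof (Hc z ltac:(lra)) as E. unfold F5 in E. fold (h z) in E.
  assert (B1 : Rabs (Lr z) <= 4 * sqrt z) by (apply Lr_small; lra).
  assert (B2 : Rabs (Lr (z * y)) <= 4 * sqrt z).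
  { eapply Rle_trans. apply Lr_small. split; nra.
    assert (sqrt (z * y) <= sqrt z) by (apply sqrt_mono; nra). lra. }
  assert (Hu : 0 < z * (1 - y) / (1 - z * y) <= z).
  { split. apply Rdiv_lt_0_compat; nra. apply Rmult_le_reg_r with (1 - z*y). nra.
    unfold Rdiv. rewrite Rmult_assoc, Rinv_l by nra.
    assert (0 <= z*y*(1-z)) by (apply Rmult_le_pos; [nra|lra]). nra. }
  assert (B3 : Rabs (Lr (z * (1 - y) / (1 - z * y))) <= 4 * sqrt z).
  { eapply Rle_trans. apply Lr_small. lra.
    assert (sqrt (z * (1 - y) / (1 - z * y)) <= sqrt z) by (apply sqrt_mono; lra). lra. }
  revert E B1 B2 B3 Hal Hsz Hpos.
  generalize (Lr z) (Lr (z * y)) (Lr (z * (1 - y) / (1 - z * y))) (h z) (Lr y) (sqrt z).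
  intros a b c d e s E B1 B2 B3 Hal Hsz Hpos.
  apply Rabs_def2 in Hal.
  apply Rabs_le_between in B1. apply Rabs_le_between in B2. apply Rabs_le_between in B3.
  destruct (Rle_dec 0 C).
  - rewrite Rabs_pos_eq in * by lra. lra.
  - rewrite Rabs_left in * by lra. lra.
Qed.

Lemma eq_mod (L R k u : R) : L - R = k * u -> u = 0 -> L = R.
Proof. intros H1 H2. rewrite H2, Rmult_0_r in H1. lra. Qed.

Lemma exR (f : R -> R) a b : (forall x, ex_derive f x) -> ex_RInt f a b.
Proof. intros H. apply (@ex_RInt_continuous R_CompleteNormedModule). intros z _. exact (ex_derive_continuous f z (H z)). Qed.

Lemma RInt_deriv (F f : R -> R) a b : (forall x, is_derive F x (f x)) ->
  (forall x, ex_derive f x) -> RInt f a b = F b - F a.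
Proof.
  intros HF Hf. apply (@is_RInt_unique R_CompleteNormedModule).
  apply (@is_RInt_derive R_CompleteNormedModule F f a b). intros; apply HF.
  intros x _. exact (ex_derive_continuous f x (Hf x)).
Qed.

Lemma lin2 (f g : R -> R) a b k1 k2 : ex_RInt f a b -> ex_RInt g a b ->
  RInt (fun x => k1 * f x - k2 * g x) a b = k1 * RInt f a b - k2 * RInt g a b.
Proof.
  intros. apply (@is_RInt_unique R_CompleteNormedModule).
  apply (@is_RInt_minus R_NormedModule (fun x => k1 * f x) (fun x => k2 * g x));
  apply (@is_RInt_scal R_NormedModule); apply (@RInt_correct R_CompleteNormedModule); auto.
Qed.

Lemma lin3 (f g h : R -> R) a b k2 k3 : ex_RInt f a b -> ex_RInt g a b -> ex_RInt h a b ->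
  RInt (fun x => f x + k2 * g x - k3 * h x) a b = RInt f a b + k2 * RInt g a b - k3 * RInt h a b.
Proof.
  intros. apply (@is_RInt_unique R_CompleteNormedModule).
  apply (@is_RInt_minus R_NormedModule (fun x => f x + k2 * g x) (fun x => k3 * h x)).
  apply (@is_RInt_plus R_NormedModule f (fun x => k2 * g x)). apply (@RInt_correct R_CompleteNormedModule); auto.
  apply (@is_RInt_scal R_NormedModule); apply (@RInt_correct R_CompleteNormedModule); auto.
  apply (@is_RInt_scal R_NormedModule); apply (@RInt_correct R_CompleteNormedModule); auto.
Qed.

Definition Ii n : R := RInt (fun x => cos x ^ (2*n)) 0 (PI/2).
Definition Jj n : R := RInt (fun x => x^2 * cos x ^ (2*n)) 0 (PI/2).

Lemma exI n a b : ex_RInt (fun x => cos x ^ (2*n)) a b.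
Proof. apply exR. intro. auto_derive. auto. Qed.
Lemma exJ n a b : ex_RInt (fun x => x^2 * cos x ^ (2*n)) a b.
Proof. apply exR. intro. auto_derive. auto. Qed.

Lemma dG n x : is_derive (fun x => sin x * cos x ^ (2*n+1)) x
   (2 * INR (n+1) * cos x ^ (2*(n+1)) - (2*INR n + 1) * cos x ^ (2*n)).
Proof.
  auto_derive. auto.
  replace (n + (n + 0) + 1)%nat with (2*n+1)%nat by lia.
  replace (Init.Nat.pred (2*n+1)) with (2*n)%nat by lia.
  replace (2*(n+1))%nat with (2*n+1+1)%nat by lia.
  rewrite !pow_add, !plus_INR, !mult_INR. simpl INR.
  apply (eq_mod _ _ (-(2*INR n+1)*cos x^(2*n)) (sin x^2 + cos x^2 - 1)).
  ring. pose proof (sin2_cos2 x) as Hsc. unfold Rsqr in Hsc. nra.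
Qed.

Lemma dF n x : is_derive (fun x => x * cos x ^ (2*n+2) + INR (n+1) * x^2 * sin x * cos x ^ (2*n+1)) x
   (cos x ^ (2*(n+1)) + 2 * INR (n+1)^2 * (x^2 * cos x ^ (2*(n+1))) - INR (n+1) * (2*INR n + 1) * (x^2 * cos x ^ (2*n))).
Proof.
  auto_derive. auto.
  replace (n + (n + 0) + 2)%nat with (2*n+1+1)%nat by lia.
  replace (n + (n + 0) + 1)%nat with (2*n+1)%nat by lia.
  replace (Init.Nat.pred (2*n+1+1)) with (2*n+1)%nat by lia.
  replace (Init.Nat.pred (2*n+1)) with (2*n)%nat by lia.
  replace (2*(n+1))%nat with (2*n+1+1)%nat by lia.
  rewrite !pow_add, !plus_INR, !mult_INR. simpl INR.
  apply (eq_mod _ _ (-(INR n + 1)*(2*INR n+1)*x^2*cos x^(2*n)) (sin x^2 + cos x^2 - 1)).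
  ring. pose proof (sin2_cos2 x) as Hsc. unfold Rsqr in Hsc. nra.
Qed.

Lemma I_rec n : 2 * INR (n+1) * Ii (n+1) = (2 * INR n + 1) * Ii n.
Proof.
  unfold Ii.
  assert (H : RInt (fun x : R => 2 * INR (n + 1) * cos x ^ (2 * (n + 1)) -
    (2 * INR n + 1) * cos x ^ (2 * n)) 0 (PI/2) =
    sin (PI/2) * cos (PI/2) ^ (2*n+1) - sin 0 * cos 0 ^ (2*n+1)).
  { apply (RInt_deriv (fun x => sin x * cos x ^ (2*n+1))). exact (dG n).
    intro. auto_derive. auto. }
  assert (E := lin2 (fun x => cos x ^ (2*(n+1))) (fun x => cos x ^ (2*n)) 0 (PI/2)
     (2*INR(n+1)) (2*INR n+1) (exI _ _ _) (exI _ _ _)). cbv beta in E.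
  rewrite E in H.
  rewrite cos_PI2, sin_0 in H. rewrite pow_ne_zero in H by lia. lra.
Qed.

Lemma J_rec n : Ii (n+1) + 2 * INR (n+1)^2 * Jj (n+1) - INR (n+1) * (2*INR n + 1) * Jj n = 0.
Proof.
  unfold Ii, Jj.
  assert (H : RInt (fun x : R => cos x ^ (2*(n+1)) + 2 * INR (n+1)^2 * (x^2 * cos x ^ (2*(n+1)))
     - INR (n+1) * (2*INR n + 1) * (x^2 * cos x ^ (2*n))) 0 (PI/2) =
    ((PI/2) * cos (PI/2) ^ (2*n+2) + INR (n+1) * (PI/2)^2 * sin (PI/2) * cos (PI/2) ^ (2*n+1))
    - (0 * cos 0 ^ (2*n+2) + INR (n+1) * 0^2 * sin 0 * cos 0 ^ (2*n+1))).
  { apply (RInt_deriv (fun x => x * cos x ^ (2*n+2) + INR (n+1) * x^2 * sin x * cos x ^ (2*n+1))).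
    exact (dF n). intro. auto_derive. auto. }
  assert (E := lin3 (fun x => cos x ^ (2*(n+1))) (fun x => x^2 * cos x ^ (2*(n+1)))
    (fun x => x^2 * cos x ^ (2*n)) 0 (PI/2) (2 * INR (n+1)^2) (INR (n+1) * (2*INR n + 1))
    (exI _ _ _) (exJ _ _ _) (exJ _ _ _)). cbv beta in E.
  rewrite E in H. rewrite cos_PI2 in H. rewrite !pow_ne_zero in H by lia. lra.
Qed.

Lemma I0 : Ii 0 = PI / 2.
Proof.
  unfold Ii. change (RInt (fun x : R => 1) 0 (PI/2) = PI/2).
  rewrite (RInt_deriv (fun x => x) (fun _ => 1)). lra.
  intro. auto_derive. auto. ring. intro. auto_derive. auto.
Qed.

Lemma J0 : Jj 0 = PI^3 / 24.
Proof.
  unfold Jj. change (RInt (fun x : R => x^2 * 1) 0 (PI/2) = PI^3/24).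
  rewrite (RInt_deriv (fun x => x^3/3) (fun x => x^2 * 1)). change ((PI/2)^3/3 - 0^3/3 = PI^3/24). field.
  intro. auto_derive; try field; auto. intro. auto_derive. auto.
Qed.

Lemma I_pos n : 0 < Ii n.
Proof.
  induction n.
  - rewrite I0. pose proof PI_RGT_0. lra.
  - pose proof (I_rec n) as H. replace (S n) with (n+1)%nat by lia.
    pose proof (pos_INR n). rewrite plus_INR in H. simpl in H.
    assert (Ii (n+1) = (2 * INR n + 1) * Ii n / (2 * (INR n + 1))) by (rewrite <- H; field; lra).
    rewrite H1. apply Rdiv_lt_0_compat. nra. lra.
Qed.

Lemma sin_ge x : 0 <= x <= 2 -> x / 4 <= sin x.
Proof.
  intro Hx. assert (x <= PI) by (pose proof PI2_1; lra).
  destruct (SIN x ltac:(lra) H) as [H1 _].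
  assert (E : sin_lb x = x - x^3/6 + x^5/120 - x^7/5040).
  { unfold sin_lb, sin_approx, sum_f_R0, sin_term. simpl. field. }
  rewrite E in H1.
  assert (x^3/6 - x^5/120 + x^7/5040 <= 3 * x / 4).
  { assert (0 <= x^2 <= 4) by nra.
    assert (x^3/6 - x^5/120 + x^7/5040 = x * (x^2/6 - (x^2)^2/120 + (x^2)^3/5040)) by field.
    rewrite H2. replace (3 * x / 4) with (x * (3/4)) by field. apply Rmult_le_compat_l. lra. nra. }
  lra.
Qed.

Lemma J_nonneg n : 0 <= Jj n.
Proof.
  unfold Jj. apply Rle_trans with (RInt (fun _ => 0) 0 (PI/2)).
  { rewrite (@RInt_const R_CompleteNormedModule). right.
    change (scal (PI / 2 - 0) 0) with ((PI / 2 - 0) * 0). ring. }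
  apply RInt_le. pose proof PI_RGT_0; lra. apply exR. intro; auto_derive; auto. apply exJ.
  intros x Hx. rewrite pow_mult. apply Rmult_le_pos. nra. apply pow_le. nra.
Qed.

Lemma J_le n : Jj n <= 16 * (Ii n - Ii (n+1)).
Proof.
  assert (E := lin2 (fun x => cos x ^ (2*n)) (fun x => cos x ^ (2*(n+1))) 0 (PI/2) 16 16
    (exI _ _ _) (exI _ _ _)). cbv beta in E.
  unfold Ii, Jj. replace (16 * (RInt (fun x : R => cos x ^ (2 * n)) 0 (PI / 2) -
     RInt (fun x : R => cos x ^ (2 * (n + 1))) 0 (PI / 2))) with
    (16 * RInt (fun x : R => cos x ^ (2 * n)) 0 (PI / 2) -
     16 * RInt (fun x : R => cos x ^ (2 * (n + 1))) 0 (PI / 2)) by ring.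
  rewrite <- E.
  apply RInt_le. pose proof PI_RGT_0; lra. apply exJ. apply exR. intro; auto_derive; auto.
  intros x Hx.
  pose proof PI2_1. pose proof PI_4.
  assert (Hs : x / 4 <= sin x) by (apply sin_ge; lra).
  replace (2 * (n+1))%nat with (2*n+2)%nat by lia. rewrite pow_add.
  assert (0 <= cos x ^ (2*n)) by (rewrite pow_mult; apply pow_le; nra).
  pose proof (sin2_cos2 x) as Hsc. unfold Rsqr in Hsc.
  assert (x^2 <= 16 * (sin x)^2) by nra.
  assert (16 * cos x ^ (2 * n) - 16 * (cos x ^ (2 * n) * cos x ^ 2) = cos x ^ (2*n) * (16 * sin x ^ 2)).
  { replace (sin x ^ 2) with (1 - cos x ^ 2) by nra. ring. }
  rewrite H3. rewrite Rmult_comm. apply Rmult_le_compat_l; lra.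
Qed.

Lemma ratio_bound n : 0 <= 2 * Jj n / Ii n <= 16 / INR (S n).
Proof.
  pose proof (I_pos n). pose proof (I_pos (n+1)). pose proof (J_nonneg n). pose proof (J_le n).
  pose proof (I_rec n). rewrite plus_INR in H3. simpl in H3. rewrite S_INR.
  pose proof (pos_INR n).
  split. apply Rdiv_le_0_compat; lra.
  assert (Ii n - Ii (n+1) = Ii n / (2 * (INR n + 1))).
  { apply (Rmult_eq_reg_l (2 * (INR n + 1))). rewrite Rmult_minus_distr_l, H3. field. lra. lra. }
  rewrite H5 in H2.
  apply (Rmult_le_reg_r (Ii n)). auto. unfold Rdiv at 1. rewrite Rmult_assoc, Rinv_l by lra.
  apply (Rle_trans _ (2 * (16 * (Ii n / (2 * (INR n + 1)))))). lra.
  right. field. lra.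
Qed.

Fixpoint ps (n : nat) : R := match n with O => 0 | S m => ps m + / INR (S m) ^ 2 end.

Lemma ps_eq n : ps n = PI^2/6 - 2 * Jj n / Ii n.
Proof.
  induction n.
  - simpl. rewrite I0, J0. field. pose proof PI_RGT_0. lra.
  - change (ps (S n)) with (ps n + / INR (S n) ^ 2). rewrite IHn. replace (S n) with (n+1)%nat by lia.
    pose proof (I_pos n). pose proof (I_pos (n+1)). pose proof (pos_INR n).
    pose proof (I_rec n) as R1. pose proof (J_rec n) as R2.
    rewrite plus_INR in *. change (INR 1) with 1 in *.
    assert (E1 : Ii n = 2 * (INR n + 1) * Ii (n+1) / (2 * INR n + 1)).
    { apply (Rmult_eq_reg_l (2 * INR n + 1)). field_simplify. lra. lra. lra. }
    assert (E2 : Jj (n+1) = ((INR n + 1) * (2 * INR n + 1) * Jj n - Ii (n+1)) / (2 * (INR n + 1)^2)).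
    { apply (Rmult_eq_reg_l (2 * (INR n + 1)^2)). field_simplify. lra. lra. nra. }
    rewrite E1, E2. field. repeat split; try lra.
Qed.

Lemma sum_n_ps n : sum_n (fun k => / INR (S k) ^ 2) n = ps (S n).
Proof.
  induction n.
  - rewrite sum_O. simpl. ring.
  - rewrite sum_Sn, IHn. reflexivity.
Qed.

Lemma basel : is_series (fun k => / INR (S k) ^ 2) (PI^2/6).
Proof.
  apply (is_lim_seq_spec (sum_n (fun k => / INR (S k) ^ 2)) (PI^2/6)).
  intro eps. destruct (INR_archimed eps 16) as [N HN]. apply cond_pos.
  exists N. intros n Hn. rewrite sum_n_ps, ps_eq.
  destruct (ratio_bound (S n)) as [B1 B2].
  rewrite Rabs_left1 by lra.
  assert (INR N <= INR (S (S n))) by (apply le_INR; lia).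
  pose proof (cond_pos eps).
  assert (16 / INR (S (S n)) < eps).
  { apply (Rmult_lt_reg_r (INR (S (S n)))). apply lt_0_INR; lia.
    unfold Rdiv. rewrite Rmult_assoc, Rinv_l. nra. apply not_0_INR; lia. }
  lra.
Qed.

Lemma Li2_1 : Li2 1 = PI^2/6.
Proof.
  unfold Li2. rewrite (Series_ext _ (fun k => / INR (S k) ^ 2)).
  apply is_series_unique. apply basel.
  intro n. rewrite pow1. unfold Rdiv. ring.
Qed.

Lemma tail1 n : 0 <= Li2 1 - ps n <= 16 / INR (S n).
Proof. rewrite Li2_1, ps_eq. pose proof (ratio_bound n). lra. Qed.

Lemma pow_le1 t n : 0 <= t <= 1 -> t ^ n <= 1.
Proof. intro H. induction n. simpl; lra. simpl. assert (0 <= t ^ n) by (apply pow_le; lra). nra. Qed.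

Definition li2t t n := t ^ S n / INR (S n) ^ 2.

Lemma li2t_bounds t n : 0 <= t <= 1 -> 0 <= li2t t n <= / INR (S n) ^ 2.
Proof.
  intro H. unfold li2t. pose proof (INRS_pos n).
  assert (0 < / INR (S n) ^ 2) by (apply Rinv_0_lt_compat; nra).
  assert (0 <= t ^ S n <= 1) by (split; [apply pow_le; lra| apply pow_le1; lra]).
  unfold Rdiv. split. apply Rmult_le_pos; lra. nra.
Qed.

Lemma ex_li2t t : 0 <= t <= 1 -> ex_series (li2t t).
Proof.
  intro H.
  refine (@ex_series_le R_AbsRing R_CompleteNormedModule _ (fun n => / INR (S n) ^ 2) _ _).
  - intro n. change norm with Rabs. destruct (li2t_bounds t n H). rewrite Rabs_pos_eq; lra.
  - exists (PI^2/6). apply basel.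
Qed.

Fixpoint pst (t : R) (n : nat) : R := match n with O => 0 | S m => pst t m + li2t t m end.

Lemma sum_pst t n : sum_f_R0 (li2t t) n = pst t (S n).
Proof. induction n. simpl. ring. simpl sum_f_R0. rewrite IHn. reflexivity. Qed.

Lemma Li2_ge_pst t N : 0 <= t <= 1 -> pst t N <= Li2 t.
Proof.
  intro H. destruct N. simpl. unfold Li2. apply Rle_trans with (Series (fun _ : nat => 0)).
  { right. rewrite (Series_ext _ (fun n : nat => 0 * 0)) by (intro; ring).
      rewrite Series_scal_l. ring. }
  { apply Series_le. intro n. pose proof (li2t_bounds t n H). unfold li2t in H0. lra.
    apply (ex_li2t t H). }
  unfold Li2. fold (li2t t). rewrite (Series_incr_n _ (S N)) by (lia || apply ex_li2t; auto).
  simpl Init.Nat.pred. rewrite sum_pst.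
  assert (0 <= Series (fun k => li2t t (S N + k))).
  { apply Rle_trans with (Series (fun _ : nat => 0)).
    { right. rewrite (Series_ext _ (fun n : nat => 0 * 0)) by (intro; ring).
      rewrite Series_scal_l. ring. }
    apply Series_le. intro n. pose proof (li2t_bounds t (S N + n) H). lra.
    apply (ex_series_incr_n (li2t t) (S N)). apply ex_li2t; auto. }
  lra.
Qed.

Lemma bernoulli t m : 0 <= t <= 1 -> 1 - t ^ m <= INR m * (1 - t).
Proof.
  intro H. induction m. simpl. lra.
  rewrite S_INR. simpl pow. assert (0 <= t ^ m <= 1) by (split; [apply pow_le; lra| apply pow_le1; lra]).
  nra.
Qed.

Lemma ps_pst n : ps n = pst 1 n.
Proof. induction n. reflexivity. change (ps (S n)) with (ps n + / INR (S n) ^ 2). change (pst 1 (S n)) with (pst 1 n + li2t 1 n). rewrite IHn. unfold li2t. rewrite pow1. unfold Rdiv. ring. Qed.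

Lemma pst_diff t N : 0 <= t <= 1 -> pst 1 N - pst t N <= INR N * (1 - t).
Proof.
  intro H. induction N. simpl. lra.
  simpl pst. rewrite S_INR.
  assert (li2t 1 N - li2t t N <= 1 - t).
  { unfold li2t. rewrite pow1. pose proof (INRS_pos N).
    assert (1 <= INR (S N)) by (apply (le_INR 1); lia).
    pose proof (bernoulli t (S N) H).
    replace (1 / INR (S N) ^ 2 - t ^ S N / INR (S N) ^ 2) with ((1 - t ^ S N) / INR (S N) ^ 2) by (field; lra).
    apply (Rmult_le_reg_r (INR (S N) ^ 2)). nra. unfold Rdiv. rewrite Rmult_assoc, Rinv_l by nra.
    rewrite Rmult_1_r. assert (0 <= (INR (S N) - 1) * INR (S N) * (1 - t)) by (repeat apply Rmult_le_pos; lra). nra. }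
  lra.
Qed.

Lemma Li2_le1 t : 0 <= t <= 1 -> Li2 t <= Li2 1.
Proof.
  intro H. unfold Li2. fold (li2t t). fold (li2t 1). apply Series_le.
  intro n. split. apply li2t_bounds; auto. unfold li2t. rewrite pow1.
  pose proof (INRS_pos n). unfold Rdiv. apply Rmult_le_compat_r.
  apply Rlt_le, Rinv_0_lt_compat; nra. apply pow_le1; lra.
  apply ex_li2t; lra.
Qed.

Lemma Li2_near1 t N : 0 <= t <= 1 -> 0 <= Li2 1 - Li2 t <= 16 / INR (S N) + INR N * (1 - t).
Proof.
  intro H. pose proof (Li2_le1 t H). pose proof (tail1 N). pose proof (Li2_ge_pst t N H).
  pose proof (pst_diff t N H). rewrite ps_pst in H1. lra.
Qed.

Definition G2 x := Lr x + Lr (1 - x).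

Lemma G2_deriv x : 0 < x < 1 -> is_derive G2 x 0.
Proof.
  intro Hx.
  assert (D1 : is_derive (fun t => 1 - t) x (-1)) by (auto_derive; [auto|ring]).
  pose proof (is_derive_plus Lr (fun t => Lr (1 - t)) x _ _ (Lr_deriv x Hx) (comp_Lr _ x _ D1 ltac:(lra))) as D.
  match type of D with is_derive _ _ ?v => assert (V : v = 0) end.
  2:{ exact (is_derive_val _ _ _ _ V D). }
  unfold dLr, plus; simpl. replace (1 - (1 - x)) with x by ring. field. lra.
Qed.

Lemma lnprod_small t : 0 < t <= 1/2 -> Rabs (/ 2 * ln t * ln (1 - t)) <= 2 * sqrt t.
Proof.
  intro H.
  pose proof (ln_1m_bound t ltac:(lra)) as H2.
  pose proof (ln_small t ltac:(lra)) as H3.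
  pose proof (sqrt_lt_R0 t ltac:(lra)) as Hs.
  pose proof (sqrt_sqrt t ltac:(lra)) as Hss.
  assert (E1 : t / (1 - t) <= 2 * t).
  { apply (Rmult_le_reg_r (1 - t)). lra. unfold Rdiv. rewrite Rmult_assoc, Rinv_l by lra. nra. }
  set (a := - ln t) in *. set (b := - ln (1 - t)) in *.
  assert (Hab : a * b <= 2 / sqrt t * (2 * t)) by (apply Rmult_le_compat; lra).
  assert (E2 : 2 / sqrt t * (2 * t) = 4 * sqrt t) by (rewrite <- Hss at 2; field; lra).
  replace (/ 2 * ln t * ln (1 - t)) with (/ 2 * (a * b)) by (unfold a, b; ring).
  assert (0 <= a * b) by (apply Rmult_le_pos; lra).
  rewrite Rabs_pos_eq by lra. lra.
Qed.

Lemma refl x : 0 < x < 1 -> Lr x + Lr (1 - x) = Li2 1.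
Proof.
  intro Hx. fold (G2 x). set (C := G2 x).
  assert (Hc : forall z, 0 < z < 1 -> G2 z = C).
  { intros z Hz. apply (zero_deriv_const G2 0 1); auto. intros; apply G2_deriv; auto. }
  destruct (Req_dec (C - Li2 1) 0) as [|HC]. lra. exfalso.
  set (e := Rabs (C - Li2 1)).
  assert (He : 0 < e) by (apply Rabs_pos_lt; auto).
  destruct (INR_archimed (e/4) 16) as [N HN]. lra.
  pose proof (pos_INR N).
  set (z := Rmin (1/2) (Rmin (e / (4 * (INR N + 1))) ((e / 24)^2))).
  assert (Hz1 : 0 < z).
  { unfold z. apply Rmin_pos. lra. apply Rmin_pos. apply Rdiv_lt_0_compat; lra. apply pow_lt. lra. }
  assert (Hz2 : z <= 1/2) by apply Rmin_l.
  assert (Hz3 : z <= e / (4 * (INR N + 1))) by (eapply Rle_trans; [apply Rmin_r|apply Rmin_l]).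
  assert (Hz4 : z <= (e / 24)^2) by (eapply Rle_trans; [apply Rmin_r|apply Rmin_r]).
  assert (Hsz : sqrt z <= e / 24).
  { rewrite <- (sqrt_pow2 (e / 24)) by lra. apply sqrt_mono. lra. }
  assert (Nz : INR N * z <= e / 4).
  { apply Rle_trans with (INR N * (e / (4 * (INR N + 1)))). apply Rmult_le_compat_l; lra.
    apply (Rmult_le_reg_r (4 * (INR N + 1))). lra. field_simplify; nra. }
  assert (T16 : 16 / INR (S N) < e / 4).
  { rewrite S_INR. apply (Rmult_lt_reg_r (INR N + 1)). lra. field_simplify; nra. }
  pose proof (Hc z ltac:(lra)) as E. unfold G2 in E.
  pose proof (Lr_small z ltac:(lra)) as B1.
  pose proof (lnprod_small z ltac:(lra)) as B2.
  pose proof (Li2_near1 (1 - z) N ltac:(lra)) as B3.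
  unfold Lr in E at 2. replace (1 - (1 - z)) with z in E by ring.
  replace (/ 2 * ln (1 - z) * ln z) with (/ 2 * ln z * ln (1 - z)) in E by ring.
  replace (1 - (1 - z)) with z in B3 by ring.
  unfold e in *.
  apply Rabs_le_between in B1. apply Rabs_le_between in B2.
  destruct (Rle_dec 0 (C - Li2 1)).
  - rewrite Rabs_pos_eq in * by lra. lra.
  - rewrite Rabs_left in * by lra. lra.
Qed.

Lemma sqrt_lb a x : 0 <= a -> a*a < x -> a < sqrt x.
Proof.
  intros Ha H. destruct (Rlt_or_le a (sqrt x)) as [|H1]; auto.
  pose proof (sqrt_sqrt x ltac:(nra)). pose proof (sqrt_pos x). nra.
Qed.
Lemma sqrt_ub a x : 0 <= a -> 0 <= x -> x < a*a -> sqrt x < a.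
Proof.
  intros Ha Hx H. destruct (Rlt_or_le (sqrt x) a) as [|H1]; auto.
  pose proof (sqrt_sqrt x Hx). nra.
Qed.

Lemma r2_bounds : (1314173591131771921166887600231/4000000000000000000000000000000) < r2 < (1314173591131771921166887600233/4000000000000000000000000000000).
Proof.
  unfold r2.
  assert (Hs: (2872281323269014329925305734109/500000000000000000000000000000) < sqrt 33 < (5744562646538028659850611468219/1000000000000000000000000000000)).
  { split; [apply sqrt_lb|apply sqrt_ub]; lra. }
  assert (Ht: (2715194527703128369341861933993/500000000000000000000000000000) < sqrt (2*(9+sqrt 33)) < (5430389055406256738683723867987/1000000000000000000000000000000)).
  { split; [apply sqrt_lb|apply sqrt_ub]; lra. }
  lra.
Qed.

Lemma r2_sq : (1727052227628177638683079014985903839416889298612862071253361/16000000000000000000000000000000000000000000000000000000000000) < r2^2 < (1727052227628177638683079014991160533781416386297529621654289/16000000000000000000000000000000000000000000000000000000000000).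
Proof. pose proof r2_bounds. split; nra. Qed.
Lemma r2_cube : (2269646428054248610204160302981750618102256344405928067742100608042930564858554547683126391/64000000000000000000000000000000000000000000000000000000000000000000000000000000000000000000) < r2^3 < (2269646428054248610204160302992112931468025410238026541832031801162525481913285722761849337/64000000000000000000000000000000000000000000000000000000000000000000000000000000000000000000).
Proof. pose proof r2_bounds. pose proof r2_sq. split; nra. Qed.

Ltac rb := pose proof r2_bounds; pose proof r2_sq; pose proof r2_cube; lra.

Lemma rP : r2^4 - r2^3 - 6*r2^2 - r2 + 1 = 0.
Proof.
  unfold r2. set (s := sqrt 33). set (t := sqrt (2*(9+s))).
  assert (Hs2 : s*s = 33) by (apply sqrt_sqrt; lra).
  assert (Hs0 : 0 <= s) by apply sqrt_pos.
  assert (Ht2 : t*t = 2*(9+s)) by (apply sqrt_sqrt; nra).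
  set (u := s - t).
  assert (H1 : u*u + 15 = 2*s*(u+1)) by (unfold u; nra).
  assert (H2 : (u*u+15)^2 = 132*(u+1)^2).
  { rewrite H1. replace (132*(u+1)^2) with (4*33*(u+1)^2) by ring. rewrite <- Hs2. ring. }
  replace (/ 4 * (1 + s - t)) with ((1 + u)/4) by (unfold u; field).
  apply (Rmult_eq_reg_l 256); [|lra].
  replace (256 * (((1 + u) / 4) ^ 4 - ((1 + u) / 4) ^ 3 - 6 * ((1 + u) / 4) ^ 2 - (1 + u) / 4 + 1))
    with ((u*u+15)^2 - 132*(u+1)^2) by field.
  rewrite H2. ring.
Qed.

Lemma by_P (A B q : R) : A - B = q * (r2^4 - r2^3 - 6*r2^2 - r2 + 1) -> A = B.
Proof. intro H. rewrite rP, Rmult_0_r in H. lra. Qed.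

Lemma five' x y z a b : 0 < x < 1 -> 0 < y < 1 -> z = x * y -> a * (1 - z) = x * (1 - y) ->
  b * (1 - z) = y * (1 - x) -> Lr x + Lr y = Lr z + Lr a + Lr b.
Proof.
  intros Hx Hy Hz Ha Hb. pose proof (F5_zero y x Hy Hx) as H. unfold F5 in H. subst z.
  assert (0 < 1 - x * y) by nra.
  replace (x * (1 - y) / (1 - x * y)) with a in H by (rewrite <- Ha; field; lra).
  replace (y * (1 - x) / (1 - x * y)) with b in H by (rewrite <- Hb; field; lra).
  lra.
Qed.

Lemma refl' x y : 0 < x < 1 -> y = 1 - x -> Lr x + Lr y = Li2 1.
Proof. intros Hx ->. apply refl; auto. Qed.
Definition e1 : R := (-7) + (6)*r2 + (42)*r2^2 + (14)*r2^3.
Definition e10 : R := (-1) + (1)*r2 + (6)*r2^2 + (1)*r2^3.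
Definition e20 : R := (1/4) + (-1/2)*r2 + (-1/2)*r2^2 + (-1/4)*r2^3.
Definition e29 : R := (-1/8) + (3/8)*r2 + (3/8)*r2^2 + (-1/8)*r2^3.
Definition e32 : R := (1)*r2^3.
Definition e34 : R := (-2/3) + (5/3)*r2 + (5/3)*r2^2 + (-2/3)*r2^3.
Definition e52 : R := (-1/12) + (1/3)*r2 + (1/3)*r2^2 + (-1/12)*r2^3.
Definition e56 : R := (-1/4) + (3/4)*r2 + (3/4)*r2^2 + (-1/4)*r2^3.
Definition e57 : R := (1/3) + (-2)*r2^2 + (-4/3)*r2^3.
Definition e59 : R := (-2) + (4)*r2 + (8)*r2^2 + (-3)*r2^3.
Definition e64 : R := (1/2) + (-1)*r2 + (-1)*r2^2 + (1/2)*r2^3.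
Definition e66 : R := (5/8) + (-3/2)*r2 + (-1/2)*r2^2 + (1/8)*r2^3.
Definition e72 : R := (1/2)*r2 + (-1/2)*r2^2 + (-1/2)*r2^3.
Definition e74 : R := (1/8) + (-1/8)*r2 + (1/8)*r2^2.
Definition e79 : R := (-1/2) + (2)*r2 + (-1/2)*r2^2.
Definition e83 : R := (9/4) + (-6)*r2 + (-2)*r2^2 + (5/4)*r2^3.
Definition e85 : R := (1)*r2^2.
Definition e91 : R := (1/2) + (-1)*r2 + (-1/2)*r2^2.
Definition e94 : R := (1) + (-3)*r2 + (1)*r2^2.
Definition e95 : R := (-1/4) + (1)*r2 + (1/2)*r2^2 + (-1/4)*r2^3.
Definition e96 : R := (1) + (-2)*r2 + (-2)*r2^2.
Definition e103 : R := (1/3) + (-7/12)*r2 + (-1/12)*r2^2 + (1/12)*r2^3.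
Definition e107 : R := (1/3) + (-2)*r2^2 + (2/3)*r2^3.
Definition e108 : R := (1) + (-5/2)*r2 + (-1/2)*r2^2 + (1/2)*r2^3.
Definition e114 : R := (-11/12) + (3)*r2 + (1)*r2^2 + (-7/12)*r2^3.
Definition e115 : R := (3/4) + (-7/4)*r2 + (-1/4)*r2^2 + (1/4)*r2^3.
Definition e116 : R := (1/6) + (-1/6)*r2^3.
Definition e118 : R := (-1) + (3)*r2 + (2)*r2^2 + (-1)*r2^3.
Definition e127 : R := (-1) + (7/2)*r2 + (1/2)*r2^2 + (-1/2)*r2^3.
Definition e129 : R := (-1) + (1)*r2 + (7)*r2^2 + (3)*r2^3.
Definition e133 : R := (1/4) + (-1/4)*r2 + (1/4)*r2^2.
Definition e136 : R := (1/2) + (-7/8)*r2 + (-1/8)*r2^2 + (1/8)*r2^3.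
Definition e141 : R := (3/4) + (-3/2)*r2 + (-1/2)*r2^2 + (1/4)*r2^3.
Definition e143 : R := (2) + (-4)*r2 + (-5)*r2^2 + (2)*r2^3.
Definition e144 : R := (1/2)*r2 + (1/2)*r2^2.
Definition e145 : R := (1)*r2 + (-1)*r2^2.
Definition e150 : R := (2) + (-1)*r2 + (-15)*r2^2 + (5)*r2^3.
Definition e154 : R := (1) + (-2)*r2 + (-1)*r2^2.
Definition e157 : R := (-1/2) + (2)*r2 + (1)*r2^2 + (-1/2)*r2^3.
Definition e160 : R := (2)*r2^2 + (1)*r2^3.
Definition e161 : R := (5) + (-14)*r2 + (-2)*r2^2 + (2)*r2^3.
Definition e168 : R := (2/3) + (-7/6)*r2 + (-1/6)*r2^2 + (1/6)*r2^3.
Definition e170 : R := (1/4) + (1/4)*r2^2.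
Definition e174 : R := (1/2) + (-1/2)*r2 + (-1/2)*r2^2.
Definition e178 : R := (5/4) + (-5/2)*r2 + (-3/2)*r2^2 + (3/4)*r2^3.
Definition e186 : R := (3/2) + (-7/2)*r2 + (-1/2)*r2^2 + (1/2)*r2^3.
Definition e190 : R := (7/6) + (-2)*r2 + (-2)*r2^2 + (5/6)*r2^3.
Definition e193 : R := (1)*r2.
Definition e196 : R := (1/4) + (1/4)*r2.
Definition e199 : R := (1/2) + (-1/2)*r2.
Definition e200 : R := (3) + (-7)*r2 + (-4)*r2^2 + (2)*r2^3.
Definition e203 : R := (2/3) + (-1)*r2 + (1/3)*r2^3.
Definition e207 : R := (1/2) + (-1/3)*r2 + (-1/3)*r2^2 + (1/6)*r2^3.
Definition e210 : R := (-1/6) + (3/2)*r2 + (1/2)*r2^2 + (-1/3)*r2^3.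
Definition e212 : R := (-2) + (7)*r2 + (1)*r2^2 + (-1)*r2^3.
Definition e216 : R := (1) + (-1)*r2 + (-3)*r2^2 + (1)*r2^3.
Definition e221 : R := (1/8) + (3/4)*r2 + (1/4)*r2^2 + (-1/8)*r2^3.
Definition e224 : R := (1)*r2 + (1)*r2^2 + (-1)*r2^3.
Definition e226 : R := (1) + (-7/4)*r2 + (-1/4)*r2^2 + (1/4)*r2^3.
Definition e228 : R := (2) + (-1)*r2 + (-10)*r2^2 + (-5)*r2^3.
Definition e231 : R := (1) + (-3/2)*r2 + (-1)*r2^2 + (1/2)*r2^3.
Definition e232 : R := (5/12) + (1/12)*r2^3.
Definition e236 : R := (3/2) + (-3)*r2 + (-1)*r2^2 + (1/2)*r2^3.
Definition e237 : R := (1/3) + (1)*r2^2 + (-1/3)*r2^3.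
Definition e238 : R := (-3/2) + (11/2)*r2 + (3/2)*r2^2 + (-1)*r2^3.
Definition e239 : R := (1)*r2 + (1)*r2^2.
Definition e242 : R := (1/2) + (-1/2)*r2^2.
Definition e248 : R := (1/4) + (1/2)*r2 + (1/2)*r2^2 + (-1/4)*r2^3.
Definition e257 : R := (1/3) + (1/3)*r2 + (1/3)*r2^2.
Definition e261 : R := (-1) + (4)*r2 + (2)*r2^2 + (-1)*r2^3.
Definition e262 : R := (1) + (-4)*r2^2 + (-2)*r2^3.
Definition e263 : R := (1/2).
Definition e264 : R := (4)*r2^2 + (2)*r2^3.
Definition e265 : R := (2) + (-4)*r2 + (-2)*r2^2 + (1)*r2^3.
Definition e284 : R := (1/2) + (1/2)*r2^2.
Definition e288 : R := (5/2) + (-11/2)*r2 + (-3/2)*r2^2 + (1)*r2^3.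
Definition e327 : R := (1/2) + (1/2)*r2.
Lemma b1 : 0 < e1 < 1.
Proof. unfold e1. rb. Qed.
Lemma b10 : 0 < e10 < 1.
Proof. unfold e10. rb. Qed.
Lemma b20 : 0 < e20 < 1.
Proof. unfold e20. rb. Qed.
Lemma b29 : 0 < e29 < 1.
Proof. unfold e29. rb. Qed.
Lemma b32 : 0 < e32 < 1.
Proof. unfold e32. rb. Qed.
Lemma b34 : 0 < e34 < 1.
Proof. unfold e34. rb. Qed.
Lemma b52 : 0 < e52 < 1.
Proof. unfold e52. rb. Qed.
Lemma b56 : 0 < e56 < 1.
Proof. unfold e56. rb. Qed.
Lemma b57 : 0 < e57 < 1.
Proof. unfold e57. rb. Qed.
Lemma b59 : 0 < e59 < 1.
Proof. unfold e59. rb. Qed.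
Lemma b64 : 0 < e64 < 1.
Proof. unfold e64. rb. Qed.
Lemma b66 : 0 < e66 < 1.
Proof. unfold e66. rb. Qed.
Lemma b72 : 0 < e72 < 1.
Proof. unfold e72. rb. Qed.
Lemma b74 : 0 < e74 < 1.
Proof. unfold e74. rb. Qed.
Lemma b79 : 0 < e79 < 1.
Proof. unfold e79. rb. Qed.
Lemma b83 : 0 < e83 < 1.
Proof. unfold e83. rb. Qed.
Lemma b85 : 0 < e85 < 1.
Proof. unfold e85. rb. Qed.
Lemma b91 : 0 < e91 < 1.
Proof. unfold e91. rb. Qed.
Lemma b94 : 0 < e94 < 1.
Proof. unfold e94. rb. Qed.
Lemma b95 : 0 < e95 < 1.
Proof. unfold e95. rb. Qed.
Lemma b96 : 0 < e96 < 1.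
Proof. unfold e96. rb. Qed.
Lemma b103 : 0 < e103 < 1.
Proof. unfold e103. rb. Qed.
Lemma b107 : 0 < e107 < 1.
Proof. unfold e107. rb. Qed.
Lemma b108 : 0 < e108 < 1.
Proof. unfold e108. rb. Qed.
Lemma b114 : 0 < e114 < 1.
Proof. unfold e114. rb. Qed.
Lemma b115 : 0 < e115 < 1.
Proof. unfold e115. rb. Qed.
Lemma b116 : 0 < e116 < 1.
Proof. unfold e116. rb. Qed.
Lemma b118 : 0 < e118 < 1.
Proof. unfold e118. rb. Qed.
Lemma b127 : 0 < e127 < 1.
Proof. unfold e127. rb. Qed.
Lemma b129 : 0 < e129 < 1.
Proof. unfold e129. rb. Qed.
Lemma b133 : 0 < e133 < 1.
Proof. unfold e133. rb. Qed.
Lemma b136 : 0 < e136 < 1.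
Proof. unfold e136. rb. Qed.
Lemma b141 : 0 < e141 < 1.
Proof. unfold e141. rb. Qed.
Lemma b143 : 0 < e143 < 1.
Proof. unfold e143. rb. Qed.
Lemma b144 : 0 < e144 < 1.
Proof. unfold e144. rb. Qed.
Lemma b145 : 0 < e145 < 1.
Proof. unfold e145. rb. Qed.
Lemma b150 : 0 < e150 < 1.
Proof. unfold e150. rb. Qed.
Lemma b154 : 0 < e154 < 1.
Proof. unfold e154. rb. Qed.
Lemma b157 : 0 < e157 < 1.
Proof. unfold e157. rb. Qed.
Lemma b160 : 0 < e160 < 1.
Proof. unfold e160. rb. Qed.
Lemma b161 : 0 < e161 < 1.
Proof. unfold e161. rb. Qed.
Lemma b168 : 0 < e168 < 1.
Proof. unfold e168. rb. Qed.
Lemma b170 : 0 < e170 < 1.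
Proof. unfold e170. rb. Qed.
Lemma b174 : 0 < e174 < 1.
Proof. unfold e174. rb. Qed.
Lemma b178 : 0 < e178 < 1.
Proof. unfold e178. rb. Qed.
Lemma b186 : 0 < e186 < 1.
Proof. unfold e186. rb. Qed.
Lemma b190 : 0 < e190 < 1.
Proof. unfold e190. rb. Qed.
Lemma b193 : 0 < e193 < 1.
Proof. unfold e193. rb. Qed.
Lemma b196 : 0 < e196 < 1.
Proof. unfold e196. rb. Qed.
Lemma b199 : 0 < e199 < 1.
Proof. unfold e199. rb. Qed.
Lemma b200 : 0 < e200 < 1.
Proof. unfold e200. rb. Qed.
Lemma b203 : 0 < e203 < 1.
Proof. unfold e203. rb. Qed.
Lemma b207 : 0 < e207 < 1.
Proof. unfold e207. rb. Qed.
Lemma b210 : 0 < e210 < 1.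
Proof. unfold e210. rb. Qed.
Lemma b212 : 0 < e212 < 1.
Proof. unfold e212. rb. Qed.
Lemma b216 : 0 < e216 < 1.
Proof. unfold e216. rb. Qed.
Lemma b221 : 0 < e221 < 1.
Proof. unfold e221. rb. Qed.
Lemma b224 : 0 < e224 < 1.
Proof. unfold e224. rb. Qed.
Lemma b226 : 0 < e226 < 1.
Proof. unfold e226. rb. Qed.
Lemma b228 : 0 < e228 < 1.
Proof. unfold e228. rb. Qed.
Lemma b231 : 0 < e231 < 1.
Proof. unfold e231. rb. Qed.
Lemma b232 : 0 < e232 < 1.
Proof. unfold e232. rb. Qed.
Lemma b236 : 0 < e236 < 1.
Proof. unfold e236. rb. Qed.
Lemma b237 : 0 < e237 < 1.
Proof. unfold e237. rb. Qed.
Lemma b238 : 0 < e238 < 1.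
Proof. unfold e238. rb. Qed.
Lemma b239 : 0 < e239 < 1.
Proof. unfold e239. rb. Qed.
Lemma b242 : 0 < e242 < 1.
Proof. unfold e242. rb. Qed.
Lemma b248 : 0 < e248 < 1.
Proof. unfold e248. rb. Qed.
Lemma b257 : 0 < e257 < 1.
Proof. unfold e257. rb. Qed.
Lemma b261 : 0 < e261 < 1.
Proof. unfold e261. rb. Qed.
Lemma b262 : 0 < e262 < 1.
Proof. unfold e262. rb. Qed.
Lemma b263 : 0 < e263 < 1.
Proof. unfold e263. rb. Qed.
Lemma b264 : 0 < e264 < 1.
Proof. unfold e264. rb. Qed.
Lemma b265 : 0 < e265 < 1.
Proof. unfold e265. rb. Qed.
Lemma b284 : 0 < e284 < 1.
Proof. unfold e284. rb. Qed.
Lemma b288 : 0 < e288 < 1.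
Proof. unfold e288. rb. Qed.
Lemma b327 : 0 < e327 < 1.
Proof. unfold e327. rb. Qed.
Lemma h0 : Lr e32 + Lr e32 = Lr e1 + Lr e29 + Lr e29.
Proof. apply five'. apply b32. apply b32.
  apply (by_P _ _ ((-7) + (-1)*r2 + (-1)*r2^2)); unfold e1, e32; field.
  apply (by_P _ _ ((-1) + (11/4)*r2 + (11/4)*r2^2)); unfold e1, e29, e32; field.
  apply (by_P _ _ ((-1) + (11/4)*r2 + (11/4)*r2^2)); unfold e1, e29, e32; field.
Qed.
Lemma h1 : Lr e95 + Lr e170 = Lr e29 + Lr e72 + Lr e160.
Proof. apply five'. apply b95. apply b170.
  apply (by_P _ _ ((-1/16) + (1/16)*r2)); unfold e29, e95, e170; field.
  apply (by_P _ _ ((3/16) + (-1/16)*r2^2)); unfold e29, e72, e95, e170; field.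
  apply (by_P _ _ ((-5/16) + (-1/16)*r2 + (1/8)*r2^2)); unfold e29, e95, e160, e170; field.
Qed.
Lemma h2 : Lr e127 + Lr e262 = Lr e72 + Lr e79 + Lr e242.
Proof. apply five'. apply b127. apply b262.
  apply (by_P _ _ ((1) + (-2)*r2 + (-1)*r2^2)); unfold e72, e127, e262; field.
  apply (by_P _ _ ((-1/2) + (7/4)*r2 + (1)*r2^2)); unfold e72, e79, e127, e262; field.
  apply (by_P _ _ ((-3/2) + (7/4)*r2 + (1)*r2^2)); unfold e72, e127, e242, e262; field.
Qed.
Lemma h3 : Lr e116 + Lr e210 = Lr e52 + Lr e85 + Lr e193.
Proof. apply five'. apply b116. apply b210.
  apply (by_P _ _ ((-1/18) + (1/36)*r2 + (-1/18)*r2^2)); unfold e52, e116, e210; field.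
  apply (by_P _ _ ((-7/36) + (1/18)*r2 + (1/18)*r2^2)); unfold e52, e85, e116, e210; field.
  apply (by_P _ _ ((5/36) + (-1/36)*r2 + (1/18)*r2^2)); unfold e52, e116, e193, e210; field.
Qed.
Lemma h4 : Lr e95 + Lr e257 = Lr e52 + Lr e56 + Lr e242.
Proof. apply five'. apply b95. apply b257.
  apply (by_P _ _ ((1/12)*r2)); unfold e52, e95, e257; field.
  apply (by_P _ _ ((-5/48) + (1/24)*r2 + (-1/48)*r2^2)); unfold e52, e56, e95, e257; field.
  apply (by_P _ _ ((1/8) + (-1/8)*r2)); unfold e52, e95, e242, e257; field.
Qed.
Lemma h5 : Lr e79 + Lr e207 = Lr e34 + Lr e56 + Lr e199.
Proof. apply five'. apply b79. apply b207.
  apply (by_P _ _ ((-5/12) + (1/12)*r2)); unfold e34, e79, e207; field.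
  apply (by_P _ _ ((-1/6) + (2/3)*r2 + (-1/6)*r2^2)); unfold e34, e56, e79, e207; field.
  apply (by_P _ _ ((1/12) + (-1/12)*r2)); unfold e34, e79, e199, e207; field.
Qed.
Lemma h6 : Lr e59 + Lr e262 = Lr e32 + Lr e34 + Lr e257.
Proof. apply five'. apply b59. apply b262.
  apply (by_P _ _ ((2) + (-2)*r2 + (-6)*r2^2)); unfold e32, e59, e262; field.
  apply (by_P _ _ ((-2/3) + (1)*r2 + (20/3)*r2^2)); unfold e32, e34, e59, e262; field.
  apply (by_P _ _ ((-8/3) + (5/3)*r2 + (6)*r2^2)); unfold e32, e59, e257, e262; field.
Qed.
Lemma h7 : Lr e143 + Lr e193 = Lr e59 + Lr e115 + Lr e170.
Proof. apply five'. apply b143. apply b193.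
  apply (by_P _ _ ((-2))); unfold e59, e143, e193; field.
  apply (by_P _ _ ((1/4) + (-2)*r2 + (3/4)*r2^2)); unfold e59, e115, e143, e193; field.
  apply (by_P _ _ ((3/4) + (3/4)*r2)); unfold e59, e143, e170, e193; field.
Qed.
Lemma h8 : Lr e186 + Lr e263 = Lr e115 + Lr e127 + Lr e226.
Proof. apply five'. apply b186. apply b263.
  apply (by_P _ _ (0)); unfold e115, e186, e263; field.
  apply (by_P _ _ ((-1) + (-1/8)*r2 + (1/8)*r2^2)); unfold e115, e127, e186, e263; field.
  apply (by_P _ _ ((1/2) + (1/16)*r2 + (-1/16)*r2^2)); unfold e115, e186, e226, e263; field.
Qed.
Lemma h9 : Lr e144 + Lr e261 = Lr e85 + Lr e95 + Lr e238.
Proof. apply five'. apply b144. apply b261.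
  apply (by_P _ _ ((1/2)*r2)); unfold e85, e144, e261; field.
  apply (by_P _ _ ((-1/4) + (-1/4)*r2)); unfold e85, e95, e144, e261; field.
  apply (by_P _ _ ((-1/2) + (1/2)*r2)); unfold e85, e144, e238, e261; field.
Qed.
Lemma h10 : Lr e174 + Lr e178 = Lr e66 + Lr e143 + Lr e150.
Proof. apply five'. apply b174. apply b178.
  apply (by_P _ _ ((3/8)*r2)); unfold e66, e174, e178; field.
  apply (by_P _ _ ((7/8) + (1)*r2 + (-1/4)*r2^2)); unfold e66, e143, e174, e178; field.
  apply (by_P _ _ ((1/8) + (27/8)*r2 + (-5/8)*r2^2)); unfold e66, e150, e174, e178; field.
Qed.
Lemma h11 : Lr e133 + Lr e236 = Lr e66 + Lr e94 + Lr e212.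
Proof. apply five'. apply b133. apply b236.
  apply (by_P _ _ ((1/4) + (-1/8)*r2)); unfold e66, e133, e236; field.
  apply (by_P _ _ ((1/2))); unfold e66, e94, e133, e236; field.
  apply (by_P _ _ ((-15/8) + (-3/8)*r2 + (1/8)*r2^2)); unfold e66, e133, e212, e236; field.
Qed.
Lemma h12 : Lr e72 + Lr e157 = Lr e20 + Lr e59 + Lr e150.
Proof. apply five'. apply b72. apply b157.
  apply (by_P _ _ ((1/4) + (-1/4)*r2^2)); unfold e20, e72, e157; field.
  apply (by_P _ _ ((-3/2) + (-1/4)*r2 + (-1/2)*r2^2)); unfold e20, e59, e72, e157; field.
  apply (by_P _ _ ((2) + (3/2)*r2^2)); unfold e20, e72, e150, e157; field.
Qed.
Lemma h13 : Lr e157 + Lr e261 = Lr e94 + Lr e108 + Lr e236.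
Proof. apply five'. apply b157. apply b261.
  apply (by_P _ _ ((1/2) + (3/2)*r2 + (-1/2)*r2^2)); unfold e94, e157, e261; field.
  apply (by_P _ _ ((1) + (-2)*r2 + (1/2)*r2^2)); unfold e94, e108, e157, e261; field.
  apply (by_P _ _ ((3/2) + (-2)*r2 + (1/2)*r2^2)); unfold e94, e157, e236, e261; field.
Qed.
Lemma h14 : Lr e108 + Lr e116 = Lr e20 + Lr e94 + Lr e107.
Proof. apply five'. apply b108. apply b116.
  apply (by_P _ _ ((1/12) + (1/12)*r2^2)); unfold e20, e108, e116; field.
  apply (by_P _ _ ((-1/12) + (1/4)*r2 + (-1/12)*r2^2)); unfold e20, e94, e108, e116; field.
  apply (by_P _ _ ((1/4) + (1/12)*r2^2)); unfold e20, e107, e108, e116; field.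
Qed.
Lemma h15 : Lr e178 + Lr e231 = Lr e94 + Lr e133 + Lr e199.
Proof. apply five'. apply b178. apply b231.
  apply (by_P _ _ ((-1/4) + (9/8)*r2 + (-3/8)*r2^2)); unfold e94, e178, e231; field.
  apply (by_P _ _ ((-9/8)*r2 + (3/8)*r2^2)); unfold e94, e133, e178, e231; field.
  apply (by_P _ _ ((1/4) + (-9/8)*r2 + (3/8)*r2^2)); unfold e94, e178, e199, e231; field.
Qed.
Lemma h16 : Lr e161 + Lr e232 = Lr e83 + Lr e118 + Lr e203.
Proof. apply five'. apply b161. apply b232.
  apply (by_P _ _ ((1/6) + (-1/6)*r2^2)); unfold e83, e161, e232; field.
  apply (by_P _ _ ((-5/3) + (-13/4)*r2 + (17/12)*r2^2)); unfold e83, e118, e161, e232; field.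
  apply (by_P _ _ ((5/6) + (1/4)*r2 + (-1/4)*r2^2)); unfold e83, e161, e203, e232; field.
Qed.
Lemma h17 : Lr e141 + Lr e265 = Lr e83 + Lr e91 + Lr e242.
Proof. apply five'. apply b141. apply b265.
  apply (by_P _ _ ((3/4) + (3/4)*r2 + (-1/4)*r2^2)); unfold e83, e141, e265; field.
  apply (by_P _ _ ((1/8) + (-1/8)*r2 + (1/4)*r2^2)); unfold e83, e91, e141, e265; field.
  apply (by_P _ _ ((-9/8) + (-1/8)*r2 + (1/4)*r2^2)); unfold e83, e141, e242, e265; field.
Qed.
Lemma h18 : Lr e174 + Lr e231 = Lr e91 + Lr e127 + Lr e200.
Proof. apply five'. apply b174. apply b231.
  apply (by_P _ _ ((1/4)*r2)); unfold e91, e174, e231; field.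
  apply (by_P _ _ ((-1/2) + (-1/2)*r2)); unfold e91, e127, e174, e231; field.
  apply (by_P _ _ ((1) + (3/4)*r2)); unfold e91, e174, e200, e231; field.
Qed.
Lemma h19 : Lr e145 + Lr e232 = Lr e72 + Lr e107 + Lr e207.
Proof. apply five'. apply b145. apply b232.
  apply (by_P _ _ ((1/12)*r2)); unfold e72, e145, e232; field.
  apply (by_P _ _ ((1/3) + (-5/12)*r2 + (1/3)*r2^2)); unfold e72, e107, e145, e232; field.
  apply (by_P _ _ ((1/12) + (-1/12)*r2 + (1/12)*r2^2)); unfold e72, e145, e207, e232; field.
Qed.
Lemma h20 : Lr e157 + Lr e231 = Lr e79 + Lr e116 + Lr e203.
Proof. apply five'. apply b157. apply b231.
  apply (by_P _ _ ((-3/4)*r2 + (1/4)*r2^2)); unfold e79, e157, e231; field.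
  apply (by_P _ _ ((1/4) + (2/3)*r2 + (-1/4)*r2^2)); unfold e79, e116, e157, e231; field.
  apply (by_P _ _ ((-1/2) + (11/12)*r2 + (-1/4)*r2^2)); unfold e79, e157, e203, e231; field.
Qed.
Lemma h21 : Lr e226 + Lr e263 = Lr e136 + Lr e161 + Lr e212.
Proof. apply five'. apply b226. apply b263.
  apply (by_P _ _ (0)); unfold e136, e226, e263; field.
  apply (by_P _ _ ((2) + (1/4)*r2 + (-1/4)*r2^2)); unfold e136, e161, e226, e263; field.
  apply (by_P _ _ ((-1) + (-1/8)*r2 + (1/8)*r2^2)); unfold e136, e212, e226, e263; field.
Qed.
Lemma h22 : Lr e284 + Lr e288 = Lr e186 + Lr e203 + Lr e210.
Proof. apply five'. apply b284. apply b288.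
  apply (by_P _ _ ((1/4) + (-1/2)*r2)); unfold e186, e284, e288; field.
  apply (by_P _ _ ((5/12) + (1/2)*r2 + (-1/6)*r2^2)); unfold e186, e203, e284, e288; field.
  apply (by_P _ _ ((-7/6) + (1/4)*r2 + (1/6)*r2^2)); unfold e186, e210, e284, e288; field.
Qed.
Lemma h23 : Lr e199 + Lr e261 = Lr e118 + Lr e136 + Lr e221.
Proof. apply five'. apply b199. apply b261.
  apply (by_P _ _ ((-1/2))); unfold e118, e199, e261; field.
  apply (by_P _ _ ((-1/4)*r2 + (1/8)*r2^2)); unfold e118, e136, e199, e261; field.
  apply (by_P _ _ ((3/4) + (3/8)*r2 + (-1/8)*r2^2)); unfold e118, e199, e221, e261; field.
Qed.
Lemma h24 : Lr e193 + Lr e238 = Lr e108 + Lr e143 + Lr e200.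
Proof. apply five'. apply b193. apply b238.
  apply (by_P _ _ ((1))); unfold e108, e193, e238; field.
  apply (by_P _ _ ((5/2)*r2 + (-1)*r2^2)); unfold e108, e143, e193, e238; field.
  apply (by_P _ _ ((3/2) + (2)*r2 + (-1)*r2^2)); unfold e108, e193, e200, e238; field.
Qed.
Lemma h25 : Lr e157 + Lr e263 = Lr e95 + Lr e107 + Lr e237.
Proof. apply five'. apply b157. apply b263.
  apply (by_P _ _ (0)); unfold e95, e157, e263; field.
  apply (by_P _ _ ((2/3) + (-2/3)*r2 + (1/6)*r2^2)); unfold e95, e107, e157, e263; field.
  apply (by_P _ _ ((-1/3) + (1/3)*r2 + (-1/12)*r2^2)); unfold e95, e157, e237, e263; field.
Qed.
Lemma h26 : Lr e193 + Lr e237 = Lr e107 + Lr e144 + Lr e199.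
Proof. apply five'. apply b193. apply b237.
  apply (by_P _ _ ((1/3))); unfold e107, e193, e237; field.
  apply (by_P _ _ ((-1/3)*r2)); unfold e107, e144, e193, e237; field.
  apply (by_P _ _ (0)); unfold e107, e193, e199, e237; field.
Qed.
Lemma h27 : Lr e141 + Lr e248 = Lr e74 + Lr e96 + Lr e224.
Proof. apply five'. apply b141. apply b248.
  apply (by_P _ _ ((-1/16) + (-3/16)*r2 + (1/16)*r2^2)); unfold e74, e141, e248; field.
  apply (by_P _ _ ((5/16) + (3/16)*r2 + (-1/16)*r2^2)); unfold e74, e96, e141, e248; field.
  apply (by_P _ _ ((-1/16) + (5/16)*r2 + (-1/16)*r2^2)); unfold e74, e141, e224, e248; field.
Qed.
Lemma h28 : Lr e103 + Lr e239 = Lr e52 + Lr e64 + Lr e224.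
Proof. apply five'. apply b103. apply b239.
  apply (by_P _ _ ((-1/12) + (-1/12)*r2)); unfold e52, e103, e239; field.
  apply (by_P _ _ ((5/24) + (-1/8)*r2 + (1/24)*r2^2)); unfold e52, e64, e103, e239; field.
  apply (by_P _ _ ((5/12)*r2 + (-1/12)*r2^2)); unfold e52, e103, e224, e239; field.
Qed.
Lemma h29 : Lr e154 + Lr e248 = Lr e85 + Lr e108 + Lr e221.
Proof. apply five'. apply b154. apply b248.
  apply (by_P _ _ ((-1/4) + (-1/4)*r2)); unfold e85, e154, e248; field.
  apply (by_P _ _ ((1/4) + (-1/4)*r2)); unfold e85, e108, e154, e248; field.
  apply (by_P _ _ ((1/8) + (3/8)*r2)); unfold e85, e154, e221, e248; field.
Qed.
Lemma h30 : Lr e190 + Lr e232 = Lr e103 + Lr e143 + Lr e193.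
Proof. apply five'. apply b190. apply b232.
  apply (by_P _ _ ((-11/72) + (7/72)*r2 + (-5/72)*r2^2)); unfold e103, e190, e232; field.
  apply (by_P _ _ ((47/72) + (23/72)*r2 + (-7/72)*r2^2)); unfold e103, e143, e190, e232; field.
  apply (by_P _ _ ((5/72) + (-7/72)*r2 + (5/72)*r2^2)); unfold e103, e190, e193, e232; field.
Qed.
Lemma h31 : Lr e145 + Lr e190 = Lr e59 + Lr e116 + Lr e168.
Proof. apply five'. apply b145. apply b190.
  apply (by_P _ _ ((-2) + (5/6)*r2)); unfold e59, e145, e190; field.
  apply (by_P _ _ ((1/2) + (-1/2)*r2^2)); unfold e59, e116, e145, e190; field.
  apply (by_P _ _ ((5/6) + (-13/6)*r2 + (1/2)*r2^2)); unfold e59, e145, e168, e190; field.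
Qed.
Lemma h32 : Lr e186 + Lr e193 = Lr e79 + Lr e154 + Lr e160.
Proof. apply five'. apply b186. apply b193.
  apply (by_P _ _ ((-1/2))); unfold e79, e186, e193; field.
  apply (by_P _ _ (0)); unfold e79, e154, e186, e193; field.
  apply (by_P _ _ ((1/2)*r2)); unfold e79, e160, e186, e193; field.
Qed.
Lemma h33 : Lr e141 + Lr e216 = Lr e64 + Lr e108 + Lr e193.
Proof. apply five'. apply b141. apply b216.
  apply (by_P _ _ ((-1/4) + (1)*r2 + (-1/4)*r2^2)); unfold e64, e141, e216; field.
  apply (by_P _ _ ((1/2) + (-1/2)*r2)); unfold e64, e108, e141, e216; field.
  apply (by_P _ _ ((-1/4) + (-1)*r2 + (1/4)*r2^2)); unfold e64, e141, e193, e216; field.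
Qed.
Lemma h34 : Lr e72 + Lr e216 = Lr e32 + Lr e52 + Lr e207.
Proof. apply five'. apply b72. apply b216.
  apply (by_P _ _ ((-1/2)*r2 + (1/2)*r2^2)); unfold e32, e72, e216; field.
  apply (by_P _ _ ((-1/12) + (1/4)*r2 + (-5/12)*r2^2)); unfold e32, e52, e72, e216; field.
  apply (by_P _ _ ((-1/2) + (2/3)*r2 + (-2/3)*r2^2)); unfold e32, e72, e207, e216; field.
Qed.
Lemma h35 : Lr e160 + Lr e265 = Lr e96 + Lr e108 + Lr e238.
Proof. apply five'. apply b160. apply b265.
  apply (by_P _ _ ((1) + (-1)*r2 + (-1)*r2^2)); unfold e96, e160, e265; field.
  apply (by_P _ _ ((2)*r2 + (1)*r2^2)); unfold e96, e108, e160, e265; field.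
  apply (by_P _ _ ((-2) + (-1)*r2 + (1)*r2^2)); unfold e96, e160, e238, e265; field.
Qed.
Lemma h36 : Lr e127 + Lr e129 = Lr e32 + Lr e114 + Lr e116.
Proof. apply five'. apply b127. apply b129.
  apply (by_P _ _ ((-1) + (7/2)*r2 + (3/2)*r2^2)); unfold e32, e127, e129; field.
  apply (by_P _ _ ((13/12) + (-47/12)*r2 + (-11/12)*r2^2)); unfold e32, e114, e127, e129; field.
  apply (by_P _ _ ((13/6) + (-10/3)*r2 + (-4/3)*r2^2)); unfold e32, e116, e127, e129; field.
Qed.
Lemma h37 : Lr e57 + Lr e118 = Lr e10 + Lr e52 + Lr e114.
Proof. apply five'. apply b57. apply b118.
  apply (by_P _ _ ((-2/3) + (-2/3)*r2 + (-4/3)*r2^2)); unfold e10, e57, e118; field.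
  apply (by_P _ _ ((-5/6) + (11/12)*r2 + (17/12)*r2^2)); unfold e10, e52, e57, e118; field.
  apply (by_P _ _ ((-7/6) + (15/4)*r2 + (23/12)*r2^2)); unfold e10, e57, e114, e118; field.
Qed.
Lemma h38 : Lr e116 + Lr e239 = Lr e57 + Lr e74 + Lr e221.
Proof. apply five'. apply b116. apply b239.
  apply (by_P _ _ ((1/3) + (1/6)*r2)); unfold e57, e116, e239; field.
  apply (by_P _ _ ((-1/12))); unfold e57, e74, e116, e239; field.
  apply (by_P _ _ ((1/12) + (-1/4)*r2 + (-1/6)*r2^2)); unfold e57, e116, e221, e239; field.
Qed.
Lemma h39 : Lr e228 + Lr e248 = Lr e129 + Lr e170 + Lr e196.
Proof. apply five'. apply b228. apply b248.
  apply (by_P _ _ ((-3/2) + (-5/4)*r2 + (-5/4)*r2^2)); unfold e129, e228, e248; field.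
  apply (by_P _ _ ((-1) + (1/2)*r2 + (5/4)*r2^2)); unfold e129, e170, e228, e248; field.
  apply (by_P _ _ ((3/4) + (5/4)*r2 + (5/4)*r2^2)); unfold e129, e196, e228, e248; field.
Qed.
Lemma h40 : Lr e228 + Lr e288 = Lr e154 + Lr e154 + Lr e238.
Proof. apply five'. apply b228. apply b288.
  apply (by_P _ _ ((-4) + (15/2)*r2 + (5)*r2^2)); unfold e154, e228, e288; field.
  apply (by_P _ _ ((3) + (-15/2)*r2 + (-5)*r2^2)); unfold e154, e228, e288; field.
  apply (by_P _ _ ((5/2) + (-17/2)*r2 + (-5)*r2^2)); unfold e154, e228, e238, e288; field.
Qed.
Lemma h41 : Lr e263 + Lr e264 = Lr e160 + Lr e196 + Lr e199.
Proof. apply five'. apply b263. apply b264.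
  apply (by_P _ _ (0)); unfold e160, e263, e264; field.
  apply (by_P _ _ ((-1/4))); unfold e160, e196, e263, e264; field.
  apply (by_P _ _ ((1/2))); unfold e160, e199, e263, e264; field.
Qed.
Lemma h42 : Lr e200 + Lr e207 = Lr e94 + Lr e157 + Lr e168.
Proof. apply five'. apply b200. apply b207.
  apply (by_P _ _ ((-1/2) + (1)*r2 + (-1/3)*r2^2)); unfold e94, e200, e207; field.
  apply (by_P _ _ ((-3/2) + (-1/2)*r2 + (1/3)*r2^2)); unfold e94, e157, e200, e207; field.
  apply (by_P _ _ ((1) + (-7/6)*r2 + (1/3)*r2^2)); unfold e94, e168, e200, e207; field.
Qed.
Lemma h43 : Lr e160 + Lr e237 = Lr e85 + Lr e116 + Lr e207.
Proof. apply five'. apply b160. apply b237.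
  apply (by_P _ _ ((1/3)*r2^2)); unfold e85, e160, e237; field.
  apply (by_P _ _ ((1/6) + (1/6)*r2 + (-1/3)*r2^2)); unfold e85, e116, e160, e237; field.
  apply (by_P _ _ ((1/6) + (-1/6)*r2 + (-1/3)*r2^2)); unfold e85, e160, e207, e237; field.
Qed.
Lemma h44 : Lr e212 + Lr e242 = Lr e118 + Lr e157 + Lr e199.
Proof. apply five'. apply b212. apply b242.
  apply (by_P _ _ ((-1/2)*r2)); unfold e118, e212, e242; field.
  apply (by_P _ _ ((2)*r2 + (-1/2)*r2^2)); unfold e118, e157, e212, e242; field.
  apply (by_P _ _ ((-1/2) + (1/2)*r2)); unfold e118, e199, e212, e242; field.
Qed.
Lemma h45 : Lr e262 + Lr e265 = Lr e160 + Lr e193 + Lr e200.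
Proof. apply five'. apply b262. apply b265.
  apply (by_P _ _ ((-2) + (2)*r2 + (2)*r2^2)); unfold e160, e262, e265; field.
  apply (by_P _ _ ((1) + (-2)*r2 + (-2)*r2^2)); unfold e160, e193, e262, e265; field.
  apply (by_P _ _ ((3) + (-4)*r2 + (-4)*r2^2)); unfold e160, e200, e262, e265; field.
Qed.
Lemma h46 : Lr e143 + Lr e262 = Lr e85 + Lr e94 + Lr e239.
Proof. apply five'. apply b143. apply b262.
  apply (by_P _ _ ((-2) + (2)*r2 + (4)*r2^2)); unfold e85, e143, e262; field.
  apply (by_P _ _ ((1) + (-2)*r2 + (-4)*r2^2)); unfold e85, e94, e143, e262; field.
  apply (by_P _ _ ((1) + (-2)*r2 + (-4)*r2^2)); unfold e85, e143, e239, e262; field.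
Qed.
Lemma h47 : Lr e242 + Lr e284 = Li2 1.
Proof. apply refl'. apply b242. apply (by_P _ _ (0)); unfold e242, e284; field. Qed.
Lemma h48 : Lr e262 + Lr e264 = Li2 1.
Proof. apply refl'. apply b262. apply (by_P _ _ (0)); unfold e262, e264; field. Qed.
Lemma h49 : Lr e133 + Lr e263 = Lr e74 + Lr e85 + Lr e242.
Proof. apply five'. apply b133. apply b263.
  apply (by_P _ _ (0)); unfold e74, e133, e263; field.
  apply (by_P _ _ ((-1/8))); unfold e74, e85, e133, e263; field.
  apply (by_P _ _ ((1/16))); unfold e74, e133, e242, e263; field.
Qed.
Lemma h50 : Lr e193 + Lr e265 = Lr e118 + Lr e133 + Lr e226.
Proof. apply five'. apply b193. apply b265.
  apply (by_P _ _ ((-1))); unfold e118, e193, e265; field.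
  apply (by_P _ _ ((1/2) + (1/4)*r2)); unfold e118, e133, e193, e265; field.
  apply (by_P _ _ ((-1/2)*r2 + (1/4)*r2^2)); unfold e118, e193, e226, e265; field.
Qed.
Lemma h51 : Lr e261 + Lr e265 = Li2 1.
Proof. apply refl'. apply b261. apply (by_P _ _ (0)); unfold e261, e265; field. Qed.
Lemma h52 : Lr e261 + Lr e263 = Lr e157 + Lr e193 + Lr e199.
Proof. apply five'. apply b261. apply b263.
  apply (by_P _ _ (0)); unfold e157, e261, e263; field.
  apply (by_P _ _ ((1/2))); unfold e157, e193, e261, e263; field.
  apply (by_P _ _ ((-1/4))); unfold e157, e199, e261, e263; field.
Qed.
Lemma h53 : Lr e157 + Lr e221 = Lr e74 + Lr e118 + Lr e193.
Proof. apply five'. apply b157. apply b221.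
  apply (by_P _ _ ((3/16) + (3/16)*r2 + (-1/16)*r2^2)); unfold e74, e157, e221; field.
  apply (by_P _ _ ((-7/16) + (-1/16)*r2 + (1/16)*r2^2)); unfold e74, e118, e157, e221; field.
  apply (by_P _ _ ((-3/16) + (-3/16)*r2 + (1/16)*r2^2)); unfold e74, e157, e193, e221; field.
Qed.
Lemma h54 : Lr e85 + Lr e85 = Lr e10 + Lr e74 + Lr e74.
Proof. apply five'. apply b85. apply b85.
  apply (by_P _ _ ((-1))); unfold e10, e85; field.
  apply (by_P _ _ ((1/4) + (-1/8)*r2)); unfold e10, e74, e85; field.
  apply (by_P _ _ ((1/4) + (-1/8)*r2)); unfold e10, e74, e85; field.
Qed.
Lemma h55 : Lr e193 + Lr e193 = Lr e85 + Lr e157 + Lr e157.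
Proof. apply five'. apply b193. apply b193.
  apply (by_P _ _ (0)); unfold e85, e193; field.
  apply (by_P _ _ ((-1/2) + (1/2)*r2)); unfold e85, e157, e193; field.
  apply (by_P _ _ ((-1/2) + (1/2)*r2)); unfold e85, e157, e193; field.
Qed.
Lemma h56 : Lr e261 + Lr e327 = Lr e193 + Lr e157 + Lr e263.
Proof. apply five'. apply b261. apply b327.
  apply (by_P _ _ ((1/2))); unfold e193, e261, e327; field.
  apply (by_P _ _ (0)); unfold e157, e193, e261, e327; field.
  apply (by_P _ _ ((-1/2))); unfold e193, e261, e263, e327; field.
Qed.
Lemma h57 : Lr e199 + Lr e327 = Li2 1.
Proof. apply refl'. apply b199. apply (by_P _ _ (0)); unfold e199, e327; field. Qed.
Lemma t193 : r2 = e193.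
Proof. apply (by_P _ _ (0)); unfold e193; field. Qed.
Lemma t85 : r2 ^ 2 = e85.
Proof. apply (by_P _ _ (0)); unfold e85; field. Qed.
Lemma t32 : r2 ^ 3 = e32.
Proof. apply (by_P _ _ (0)); unfold e32; field. Qed.
Lemma t10 : r2 ^ 4 = e10.
Proof. apply (by_P _ _ ((1))); unfold e10; field. Qed.
Lemma t1 : r2 ^ 6 = e1.
Proof. apply (by_P _ _ ((7) + (1)*r2 + (1)*r2^2)); unfold e1; field. Qed.
Lemma ladder : 24 * Lr e193 + 21 * Lr e85 - 8 * Lr e32 - 3 * Lr e10 + Lr e1 = 11 * Li2 1.
Proof.
  pose proof h0.
  pose proof h1.
  pose proof h2.
  pose proof h3.
  pose proof h4.
  pose proof h5.
  pose proof h6.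
  pose proof h7.
  pose proof h8.
  pose proof h9.
  pose proof h10.
  pose proof h11.
  pose proof h12.
  pose proof h13.
  pose proof h14.
  pose proof h15.
  pose proof h16.
  pose proof h17.
  pose proof h18.
  pose proof h19.
  pose proof h20.
  pose proof h21.
  pose proof h22.
  pose proof h23.
  pose proof h24.
  pose proof h25.
  pose proof h26.
  pose proof h27.
  pose proof h28.
  pose proof h29.
  pose proof h30.
  pose proof h31.
  pose proof h32.
  pose proof h33.
  pose proof h34.
  pose proof h35.
  pose proof h36.
  pose proof h37.
  pose proof h38.
  pose proof h39.
  pose proof h40.
  pose proof h41.
  pose proof h42.
  pose proof h43.
  pose proof h44.
  pose proof h45.
  pose proof h46.
  pose proof h47.
  pose proof h48.
  pose proof h49.
  pose proof h50.
  pose proof h51.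
  pose proof h52.
  pose proof h53.
  pose proof h54.
  pose proof h55.
  pose proof h56.
  pose proof h57.
  lra.
Qed.

Theorem mainTheorem4 :
  Li2 (r2 ^ 6) - 3 * Li2 (r2 ^ 4) - 8 * Li2 (r2 ^ 3) + 21 * Li2 (r2 ^ 2)
  + 24 * Li2 r2 - 11 * zeta2 = - 6 * (ln r2) ^ 2.
Proof.
  pose proof ladder as HL.
  rewrite <- t193, <- t85, <- t32, <- t10, <- t1 in HL.
  assert (Hr : 0 < r2 < 1) by rb.
  assert (Hr2 : 0 < r2^2) by (apply pow_lt; lra).
  assert (Hc : 0 < 1 + r2 + r2^2) by lra.
  assert (Hd : 0 < 1 - r2 + r2^2) by nra.
  assert (He : 0 < 1 + r2^2) by lra.
  assert (L2 : ln (1 - r2^2) = ln (1 - r2) + ln (1 + r2)).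
  { rewrite <- ln_mult by lra. f_equal. ring. }
  assert (L3 : ln (1 - r2^3) = ln (1 - r2) + ln (1 + r2 + r2^2)).
  { rewrite <- ln_mult by lra. f_equal. ring. }
  assert (L4 : ln (1 - r2^4) = ln (1 - r2) + ln (1 + r2) + ln (1 + r2^2)).
  { rewrite <- !ln_mult by nra. f_equal. ring. }
  assert (L6 : ln (1 - r2^6) = ln (1 - r2) + ln (1 + r2) + ln (1 + r2 + r2^2) + ln (1 - r2 + r2^2)).
  { rewrite <- !ln_mult; try nra. f_equal. ring.
    apply Rmult_lt_0_compat; nra. }
  assert (EC : (1 + r2 + r2^2) * (1 + r2^2) = 2 * ((1 - r2) * (1 + r2))^2).
  { apply (by_P _ _ (-1)). ring. }
  assert (ED : (1 - r2 + r2^2) * (1 + r2^2) = 2^3 * r2^2).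
  { apply (by_P _ _ 1). ring. }
  assert (HC : ln (1 + r2 + r2^2) + ln (1 + r2^2) = ln 2 + 2 * (ln (1 - r2) + ln (1 + r2))).
  { rewrite <- ln_mult by lra. rewrite EC. rewrite ln_mult, ln_pow, ln_mult; try nra.
    simpl INR. ring. }
  assert (HD : ln (1 - r2 + r2^2) + ln (1 + r2^2) = 3 * ln 2 + 2 * ln r2).
  { rewrite <- ln_mult by lra. rewrite ED. rewrite ln_mult, !ln_pow; try nra.
    simpl INR. ring. }
  assert (K : 24 * (/ 2 * ln r2 * ln (1 - r2)) + 21 * (/ 2 * ln (r2^2) * ln (1 - r2^2))
     - 8 * (/ 2 * ln (r2^3) * ln (1 - r2^3)) - 3 * (/ 2 * ln (r2^4) * ln (1 - r2^4))
     + / 2 * ln (r2^6) * ln (1 - r2^6) = 6 * ln r2 ^ 2).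
  { rewrite !ln_pow by lra. rewrite L2, L3, L4, L6.
    replace (ln (1 + r2 + r2^2)) with (ln 2 + 2 * (ln (1 - r2) + ln (1 + r2)) - ln (1 + r2^2)) by lra.
    replace (ln (1 - r2 + r2^2)) with (3 * ln 2 + 2 * ln r2 - ln (1 + r2^2)) by lra.
    simpl INR. field. }
  unfold Lr in HL. unfold zeta2. rewrite <- Li2_1. lra.
Qed.
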